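(* Let $D=\{z\in\mathbb C^2:\ |z_2|^2+x_1^2+y_1^4<1\}$ with defining function $\rho$, fix $\zeta\in bD$, and use the local coordinates centered at $\zeta$ described in the context, with $\delta>0$ small enough that $\frac{\partial\Delta}{\partial u_2}(w,z)\ne0$ for $w\in bD$, $|w-\zeta|<\delta$, $|z-\zeta|<\delta$. Suppose $f$ is a $C^1$ function on $bD$ supported in $\{w\in bD:|w-\zeta|<\delta\}$. If $z\in D$ and $|z-\zeta|<\delta$, then $$\mathbf C f(z)=\int_{bD}\frac{1}{\Delta(w,z)}\,\frac{\partial}{\partial u_2}\big(f(w)\gamma(w)\big)\,du_1\,dv_1\,du_2,\qquad \gamma(w)=\frac{\Lambda(u_1,v_1,u_2)}{\frac{\partial\Delta}{\partial u_2}(w,z)}.$$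
   Context: $\rho(w)=|w_2|^2+u_1^2+v_1^4-1$, $\Delta(w,z)=\sum_{j=1}^2\frac{\partial\rho}{\partial w_j}(w)(w_j-z_j)$. The Cauchy-Leray integral is $\mathbf C f(z)=\frac{1}{(2\pi i)^2}\int_{bD}f(w)\,\frac{j^*(\partial\rho\wedge\bar\partial\partial\rho)(w)}{\Delta(w,z)^2}$, $z\in D$, with $j^*$ the pullback by $bD\hookrightarrow\mathbb C^2$; equivalently $\mathbf Cf(z)=\int_{bD}\frac{f(w)\Gamma(w)}{\Delta(w,z)^2}d\sigma(w)$, where $d\sigma$ is induced Lebesgue measure and $\Gamma$ is the smooth positive function with $\Gamma\,d\sigma=(2\pi i)^{-2}j^*(\partial\rho\wedge\bar\partial\partial\rho)$. Local coordinates: $w=(u_1+iv_1,u_2+iv_2)$ obtained by a translation and unitary map so that $\zeta=0$, $\partial\rho/\partial v_2(\zeta)=|\nabla\rho(\zeta)|$ and the other first partials of $\rho$ vanish at $\zeta$; near $\zeta$, $bD$ is the graph $v_2=\Phi(u_1,v_1,u_2)$, and $\Lambda$ is defined by $\Gamma(w)\,d\sigma(w)=\Lambda(u_1,v_1,u_2)\,du_1\,dv_1\,du_2$ there. *)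

(* Defs.v *)
From Stdlib Require Import Reals.
From Coquelicot Require Import Coquelicot.
Open Scope R_scope.

Definition C2 : Type := (C * C)%type.

(** Real coordinates of w = (u1 + i v1, u2 + i v2); index 0,1,2,3 <-> u1,v1,u2,v2. *)
Definition rcoord (k : nat) (w : C2) : R :=
  match k with
  | 0%nat => Re (fst w) | 1%nat => Im (fst w)
  | 2%nat => Re (snd w) | _ => Im (snd w) end.

Definition shift (k : nat) (s : R) (w : C2) : C2 :=
  match k with
  | 0%nat => (Cplus (fst w) (RtoC s), snd w)
  | 1%nat => (Cplus (fst w) (Cmult Ci (RtoC s)), snd w)
  | 2%nat => (fst w, Cplus (snd w) (RtoC s))
  | _ => (fst w, Cplus (snd w) (Cmult Ci (RtoC s))) end.

Definition pdR (k : nat) (g : C2 -> R) (w : C2) : R :=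
  Derive (fun s => g (shift k s w)) 0.
Definition pdC (k : nat) (G : C2 -> C) (w : C2) : C :=
  (pdR k (fun x => Re (G x)) w, pdR k (fun x => Im (G x)) w).

(** Wirtinger derivatives d/dw_j and d/d(conj w_j), j = 0,1 standing for the
    paper's indices 1,2. *)
Definition dw (j : nat) (G : C2 -> C) (w : C2) : C :=
  Cmult (RtoC (/2)) (Cminus (pdC (2*j) G w) (Cmult Ci (pdC (2*j+1) G w))).
Definition dwbar (j : nat) (G : C2 -> C) (w : C2) : C :=
  Cmult (RtoC (/2)) (Cplus (pdC (2*j) G w) (Cmult Ci (pdC (2*j+1) G w))).

(** rho(w) = |w2|^2 + u1^2 + v1^4 - 1;  D = {rho < 0},  bD = {rho = 0}. *)
Definition rho (w : C2) : R :=
  (Cmod (snd w)) ^ 2 + (Re (fst w)) ^ 2 + (Im (fst w)) ^ 4 - 1.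
Definition rhoC (w : C2) : C := RtoC (rho w).

Definition rho_d (j : nat) (w : C2) : C := dw j rhoC w.
Definition rho_ddbar (k l : nat) (w : C2) : C := dwbar l (rho_d k) w.

Definition ccoord (j : nat) (w : C2) : C :=
  match j with 0%nat => fst w | _ => snd w end.

Definition sum2 (F : nat -> C) : C := Cplus (F 0%nat) (F 1%nat).

Definition LDelta (w z : C2) : C :=
  sum2 (fun j => Cmult (rho_d j w) (Cminus (ccoord j w) (ccoord j z))).

Definition dist2 (w z : C2) : R :=
  sqrt ((Cmod (Cminus (fst w) (fst z))) ^ 2 + (Cmod (Cminus (snd w) (snd z))) ^ 2).

Definition grad_norm (g : C2 -> R) (w : C2) : R :=
  sqrt ((pdR 0 g w) ^ 2 + (pdR 1 g w) ^ 2 + (pdR 2 g w) ^ 2 + (pdR 3 g w) ^ 2).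

(** 2x2 complex matrices U = ((a,b),(c,d)), unitarity U^* U = I. *)
Definition mat2 : Type := ((C * C) * (C * C))%type.
Definition unitary2 (U : mat2) : Prop :=
  let '((a, b), (c, d)) := U in
  Cplus (Cmult (Cconj a) a) (Cmult (Cconj c) c) = RtoC 1 /\
  Cplus (Cmult (Cconj b) b) (Cmult (Cconj d) d) = RtoC 1 /\
  Cplus (Cmult (Cconj a) b) (Cmult (Cconj c) d) = RtoC 0.

(** Local coordinates w' = U (w - zeta), and the inverse w = zeta + U^* w'. *)
Definition to_loc (zeta : C2) (U : mat2) (w : C2) : C2 :=
  let '((a, b), (c, d)) := U in
  let x := Cminus (fst w) (fst zeta) in let y := Cminus (snd w) (snd zeta) in
  (Cplus (Cmult a x) (Cmult b y), Cplus (Cmult c x) (Cmult d y)).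
Definition from_loc (zeta : C2) (U : mat2) (w' : C2) : C2 :=
  let '((a, b), (c, d)) := U in
  (Cplus (fst zeta) (Cplus (Cmult (Cconj a) (fst w')) (Cmult (Cconj c) (snd w'))),
   Cplus (snd zeta) (Cplus (Cmult (Cconj b) (fst w')) (Cmult (Cconj d) (snd w')))).

Definition C2zero : C2 := (RtoC 0, RtoC 0).

(** Graph parametrization of bD near zeta:
    (u1,v1,u2) |-> the point with local coordinates (u1 + i v1, u2 + i Phi(u1,v1,u2)). *)
Definition psi (zeta : C2) (U : mat2) (Phi : R -> R -> R -> R) (t1 t2 t3 : R) : C2 :=
  from_loc zeta U (Cplus (RtoC t1) (Cmult Ci (RtoC t2)),
                   Cplus (RtoC t3) (Cmult Ci (RtoC (Phi t1 t2 t3)))).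

Definition CD (h : R -> C) (x : R) : C :=
  (Derive (fun s => Re (h s)) x, Derive (fun s => Im (h s)) x).
Definition ex_CD (h : R -> C) (x : R) : Prop :=
  ex_derive (fun s => Re (h s)) x /\ ex_derive (fun s => Im (h s)) x.

(** Partial derivatives d/du1, d/dv1, d/du2 (k = 0,1,2) of functions of (u1,v1,u2). *)
Definition pt (k : nat) (g : R -> R -> R -> C) (t1 t2 t3 : R) : C :=
  match k with
  | 0%nat => CD (fun s => g s t2 t3) t1
  | 1%nat => CD (fun s => g t1 s t3) t2
  | _ => CD (fun s => g t1 t2 s) t3 end.
Definition ex_pt (k : nat) (g : R -> R -> R -> C) (t1 t2 t3 : R) : Prop :=
  match k with
  | 0%nat => ex_CD (fun s => g s t2 t3) t1
  | 1%nat => ex_CD (fun s => g t1 s t3) t2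
  | _ => ex_CD (fun s => g t1 t2 s) t3 end.

Definition C1_on (V : R -> R -> R -> Prop) (g : R -> R -> R -> C) : Prop :=
  forall t1 t2 t3, V t1 t2 t3 -> forall k, (k < 3)%nat ->
    ex_pt k g t1 t2 t3 /\
    continuous (fun p : R * R * R => pt k g (fst (fst p)) (snd (fst p)) (snd p))
               (t1, t2, t3).
Definition C2_on (V : R -> R -> R -> Prop) (g : R -> R -> R -> C) : Prop :=
  C1_on V g /\ forall k, (k < 3)%nat -> C1_on V (pt k g).

Definition det3 (x y z : nat -> C) : C :=
  Cminus (Cplus (Cmult (x 0%nat) (Cminus (Cmult (y 1%nat) (z 2%nat)) (Cmult (y 2%nat) (z 1%nat))))
                (Cmult (x 2%nat) (Cminus (Cmult (y 0%nat) (z 1%nat)) (Cmult (y 1%nat) (z 0%nat)))))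
         (Cmult (x 1%nat) (Cminus (Cmult (y 0%nat) (z 2%nat)) (Cmult (y 2%nat) (z 0%nat)))).

(** Coefficient c of du1 /\ dv1 /\ du2 in the pullback by psi of the 3-form
    d rho /\ dbar d rho
      = sum_{j,k,l} rho_j rho_{k lbar} dw_j /\ d(conj w_l) /\ dw_k. *)
Definition pullback_coef (zeta : C2) (U : mat2) (Phi : R -> R -> R -> R)
  (t1 t2 t3 : R) : C :=
  let ps := psi zeta U Phi in
  let W := fun j a b c => ccoord j (ps a b c) in
  let Wb := fun l a b c => Cconj (ccoord l (ps a b c)) in
  let w := ps t1 t2 t3 in
  sum2 (fun j => sum2 (fun k => sum2 (fun l =>
    Cmult (Cmult (rho_d j w) (rho_ddbar k l w))
      (det3 (fun m => pt m (W j) t1 t2 t3)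
            (fun m => pt m (Wb l) t1 t2 t3)
            (fun m => pt m (W k) t1 t2 t3))))).

(** LambdaL: Gamma dsigma = LambdaL du1 dv1 du2, where
    Gamma dsigma = (2 pi i)^(-2) j^*(d rho /\ dbar d rho) with bD carrying its
    boundary orientation.  The chart (u1,v1,u2) is negatively oriented with
    respect to the boundary orientation (the outward normal is +d/dv2 in local
    coordinates and (v2,u1,v1,u2) is an odd permutation of (u1,v1,u2,v2)),
    hence the minus sign. *)
Definition LambdaL (zeta : C2) (U : mat2) (Phi : R -> R -> R -> R) (t1 t2 t3 : R) : C :=
  let twopii := Cmult (RtoC (2 * PI)) Ci in
  Copp (Cmult (Cinv (Cmult twopii twopii)) (pullback_coef zeta U Phi t1 t2 t3)).

Definition dDelta_u2 (zeta : C2) (U : mat2) (Phi : R -> R -> R -> R)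
  (z : C2) (t1 t2 t3 : R) : C :=
  CD (fun s => LDelta (psi zeta U Phi t1 t2 s) z) t3.

Definition gammaL (zeta : C2) (U : mat2) (Phi : R -> R -> R -> R)
  (z : C2) (t1 t2 t3 : R) : C :=
  Cdiv (LambdaL zeta U Phi t1 t2 t3) (dDelta_u2 zeta U Phi z t1 t2 t3).

Definition chart_dom (zeta : C2) (U : mat2) (Phi : R -> R -> R -> R) (delta : R)
  (t1 t2 t3 : R) : Prop := dist2 (psi zeta U Phi t1 t2 t3) zeta < delta.

Definition restr (zeta : C2) (U : mat2) (Phi : R -> R -> R -> R) (delta : R)
  (g : R -> R -> R -> C) (t1 t2 t3 : R) : C :=
  if Rlt_dec (dist2 (psi zeta U Phi t1 t2 t3) zeta) delta then g t1 t2 t3 else RtoC 0.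

(** Lebesgue integral over R^3 du1 dv1 du2, as iterated (improper) integrals. *)
Definition int3 (g : R -> R -> R -> C) : C :=
  RInt_gen (V := C_R_CompleteNormedModule) (fun t1 =>
    RInt_gen (V := C_R_CompleteNormedModule) (fun t2 =>
      RInt_gen (V := C_R_CompleteNormedModule) (fun t3 => g t1 t2 t3)
        (Rbar_locally m_infty) (Rbar_locally p_infty))
      (Rbar_locally m_infty) (Rbar_locally p_infty))
    (Rbar_locally m_infty) (Rbar_locally p_infty).

(** Cauchy-Leray integral C f(z) = int_{bD} f Gamma / LDelta^2 dsigma, for f
    supported in {w in bD : |w - zeta| < delta}, written in the chart. *)
Definition cauchy_leray_chart (zeta : C2) (U : mat2) (Phi : R -> R -> R -> R)
  (delta : R) (f : C2 -> C) (z : C2) : C :=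
  int3 (restr zeta U Phi delta (fun t1 t2 t3 =>
    let w := psi zeta U Phi t1 t2 t3 in
    Cdiv (Cmult (f w) (LambdaL zeta U Phi t1 t2 t3)) (Cmult (LDelta w z) (LDelta w z)))).

(* Main.v *)
Require Import Defs.
From Stdlib Require Import Reals Lra Lia Arith Psatz FunctionalExtensionality PropExtensionality ClassicalEpsilon Classical Rtopology.
From Coquelicot Require Import Coquelicot.
Open Scope R_scope.

Lemma rc_plus {T : UniformSpace} (f g : T -> R) x :
  continuous f x -> continuous g x -> continuous (fun y => f y + g y) x.
Proof. intros; apply (continuous_plus f g); auto. Qed.
Lemma rc_mult {T : UniformSpace} (f g : T -> R) x :
  continuous f x -> continuous g x -> continuous (fun y => f y * g y) x.
Proof. intros; apply (continuous_mult f g); auto. Qed.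
Lemma rc_opp {T : UniformSpace} (f : T -> R) x :
  continuous f x -> continuous (fun y => - f y) x.
Proof. intros; apply (continuous_opp f); auto. Qed.
Lemma rc_minus {T : UniformSpace} (f g : T -> R) x :
  continuous f x -> continuous g x -> continuous (fun y => f y - g y) x.
Proof. intros; apply rc_plus; auto; apply rc_opp; auto. Qed.
Lemma rc_const {T : UniformSpace} (c : R) (x : T) : continuous (fun _ => c) x.
Proof. apply continuous_const. Qed.
Lemma rc_id (x : R) : continuous (fun y : R => y) x.
Proof. apply continuous_id. Qed.
Lemma rc_inv (f : R -> R) x : continuous f x -> f x <> 0 -> continuous (fun y => / f y) x.
Proof.
  intros Hf Hx. apply (continuous_comp f Rinv). auto.
  apply continuity_pt_filterlim. apply continuity_pt_inv; auto.
  apply continuity_pt_id.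
Qed.

Lemma rd_eq (f : R -> R) x a b : is_derive f x a -> a = b -> is_derive f x b.
Proof. intros H ->; auto. Qed.
Lemma rd_plus (f g : R -> R) x a b :
  is_derive f x a -> is_derive g x b -> is_derive (fun y => f y + g y) x (a + b).
Proof. intros; apply (is_derive_plus f g); auto. Qed.
Lemma rd_opp (f : R -> R) x a :
  is_derive f x a -> is_derive (fun y => - f y) x (- a).
Proof. intros; apply (is_derive_opp f); auto. Qed.
Lemma rd_minus (f g : R -> R) x a b :
  is_derive f x a -> is_derive g x b -> is_derive (fun y => f y - g y) x (a - b).
Proof. intros; apply (is_derive_minus f g); auto. Qed.
Lemma rd_mult (f g : R -> R) x a b :
  is_derive f x a -> is_derive g x b -> is_derive (fun y => f y * g y) x (a * g x + f x * b).
Proof. intros; apply (is_derive_mult f g); auto. intros; apply Rmult_comm. Qed.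
Lemma rd_const (c x : R) : is_derive (fun _ => c) x 0.
Proof. apply (is_derive_const c). Qed.
Lemma rd_id (x : R) : is_derive (fun y => y) x 1.
Proof. apply (is_derive_id x). Qed.

Definition CDer (h : R -> C) (x : R) (d : C) : Prop :=
  is_derive (fun s => fst (h s)) x (fst d) /\ is_derive (fun s => snd (h s)) x (snd d).
Definition Ccont (h : R -> C) (x : R) : Prop :=
  continuous (fun s => fst (h s)) x /\ continuous (fun s => snd (h s)) x.

Lemma C_ext (a b : C) : fst a = fst b -> snd a = snd b -> a = b.
Proof. destruct a, b; simpl; intros -> ->; auto. Qed.

Lemma CDer_eq h x a b : CDer h x a -> a = b -> CDer h x b.
Proof. intros H ->; auto. Qed.
Lemma CDer_plus h k x a b : CDer h x a -> CDer k x b -> CDer (fun s => Cplus (h s) (k s)) x (Cplus a b).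
Proof. intros [? ?] [? ?]; split; simpl; apply rd_plus; auto. Qed.
Lemma CDer_opp h x a : CDer h x a -> CDer (fun s => Copp (h s)) x (Copp a).
Proof. intros [? ?]; split; simpl; apply rd_opp; auto. Qed.
Lemma CDer_minus h k x a b : CDer h x a -> CDer k x b -> CDer (fun s => Cminus (h s) (k s)) x (Cminus a b).
Proof. intros; apply CDer_plus; auto; apply CDer_opp; auto. Qed.
Lemma CDer_mult h k x a b : CDer h x a -> CDer k x b ->
  CDer (fun s => Cmult (h s) (k s)) x (Cplus (Cmult a (k x)) (Cmult (h x) b)).
Proof. intros [? ?] [? ?]; split; simpl.
  eapply rd_eq. apply rd_minus; apply rd_mult; eassumption. cbv beta; simpl; ring.
  eapply rd_eq. apply rd_plus; apply rd_mult; eassumption. cbv beta; simpl; ring.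
Qed.
Lemma CDer_conj h x a : CDer h x a -> CDer (fun s => Cconj (h s)) x (Cconj a).
Proof. intros [? ?]; split; simpl; auto. apply rd_opp; auto. Qed.
Lemma CDer_const (c : C) x : CDer (fun _ => c) x (RtoC 0).
Proof. split; simpl; apply rd_const. Qed.
Lemma CDer_RtoC (g : R -> R) x a : is_derive g x a -> CDer (fun s => RtoC (g s)) x (RtoC a).
Proof. intros; split; simpl; auto. apply rd_const. Qed.
Lemma CDer_Re h x a : CDer h x a -> CDer (fun s => RtoC (fst (h s))) x (RtoC (fst a)).
Proof. intros [? ?]; apply CDer_RtoC; auto. Qed.
Lemma CDer_Im h x a : CDer h x a -> CDer (fun s => RtoC (snd (h s))) x (RtoC (snd a)).
Proof. intros [? ?]; apply CDer_RtoC; auto. Qed.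

Lemma Cnorm2_neq0 (z : C) : z <> RtoC 0 -> fst z ^ 2 + snd z ^ 2 <> 0.
Proof. destruct z as [u v]; simpl; intros H E. apply H.
  assert (u = 0) by nra. assert (v = 0) by nra. subst; reflexivity. Qed.

Lemma CDer_inv h x a : h x <> RtoC 0 -> CDer h x a ->
  CDer (fun s => Cinv (h s)) x (Copp (Cmult a (Cinv (Cmult (h x) (h x))))).
Proof. intros Hn [H1 H2]. pose proof (Cnorm2_neq0 _ Hn) as Hn2.
  destruct (h x) as [u v] eqn:E. simpl in Hn2.
  assert (Dn : is_derive (fun s => fst (h s) ^ 2 + snd (h s) ^2) x (2 * u * fst a + 2 * v * snd a)).
  { apply (is_derive_ext (fun s => fst (h s) * fst (h s) + snd (h s) * snd (h s))).
    intros; simpl; ring.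
    eapply rd_eq. apply rd_plus; apply rd_mult; eassumption. cbv beta; rewrite ?E; simpl; ring. }
  split; simpl.
  - eapply rd_eq. apply (is_derive_div (fun s => fst (h s)) (fun s => fst (h s)^2 + snd (h s)^2)).
    exact H1. exact Dn. cbv beta; rewrite E; simpl; exact Hn2.
    cbv beta; rewrite E; simpl. field; repeat split; try (intro Hz; apply Hn2; nra).
  - eapply rd_eq. apply (is_derive_div (fun s => - snd (h s)) (fun s => fst (h s)^2 + snd (h s)^2)).
    apply rd_opp; exact H2. exact Dn. cbv beta; rewrite E; simpl; exact Hn2.
    cbv beta; rewrite E; simpl. field; repeat split; try (intro Hz; apply Hn2; nra).
Qed.

Lemma CDer_cont h x a : CDer h x a -> Ccont h x.
Proof. intros [H1 H2]; split; apply (ex_derive_continuous (K:=R_AbsRing) (V:=R_NormedModule)); eexists; eauto. Qed.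

Lemma CDer_ext_loc h k x a : locally x (fun s => h s = k s) -> CDer h x a -> CDer k x a.
Proof. intros L [H1 H2]; split.
  apply (is_derive_ext_loc (fun s => fst (h s))); auto. apply (filter_imp _ _ (fun s (e : h s = k s) => f_equal fst e) L).
  apply (is_derive_ext_loc (fun s => snd (h s))); auto. apply (filter_imp _ _ (fun s (e : h s = k s) => f_equal snd e) L).
Qed.

Definition CDf (h : R -> C) (x : R) : C :=
  (Derive (fun s => fst (h s)) x, Derive (fun s => snd (h s)) x).

Lemma CDer_unique h x a : CDer h x a -> CDf h x = a.
Proof. intros [H1 H2]; apply C_ext; simpl; apply is_derive_unique; auto. Qed.

Lemma Ccont_plus h k x : Ccont h x -> Ccont k x -> Ccont (fun s => Cplus (h s) (k s)) x.
Proof. intros [? ?] [? ?]; split; simpl; apply rc_plus; auto. Qed.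
Lemma Ccont_opp h x : Ccont h x -> Ccont (fun s => Copp (h s)) x.
Proof. intros [? ?]; split; simpl; apply rc_opp; auto. Qed.
Lemma Ccont_mult h k x : Ccont h x -> Ccont k x -> Ccont (fun s => Cmult (h s) (k s)) x.
Proof. intros [? ?] [? ?]; split; simpl.
  apply rc_minus; apply rc_mult; auto. apply rc_plus; apply rc_mult; auto. Qed.
Lemma Ccont_conj h x : Ccont h x -> Ccont (fun s => Cconj (h s)) x.
Proof. intros [? ?]; split; simpl; auto; apply rc_opp; auto. Qed.
Lemma Ccont_const (c : C) x : Ccont (fun _ => c) x.
Proof. split; apply rc_const. Qed.
Lemma Ccont_RtoC (g : R -> R) x : continuous g x -> Ccont (fun s => RtoC (g s)) x.
Proof. split; simpl; auto. apply rc_const. Qed.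
Lemma Ccont_Re h x : Ccont h x -> Ccont (fun s => RtoC (fst (h s))) x.
Proof. intros [? ?]; apply Ccont_RtoC; auto. Qed.
Lemma Ccont_Im h x : Ccont h x -> Ccont (fun s => RtoC (snd (h s))) x.
Proof. intros [? ?]; apply Ccont_RtoC; auto. Qed.
Lemma Ccont_inv h x : h x <> RtoC 0 -> Ccont h x -> Ccont (fun s => Cinv (h s)) x.
Proof. intros Hn [H1 H2]. pose proof (Cnorm2_neq0 _ Hn) as Hn2.
  assert (Hc : continuous (fun s => fst (h s) ^ 2 + snd (h s) ^ 2) x).
  { apply rc_plus; simpl; apply rc_mult; auto; apply rc_mult; auto; apply rc_const. }
  split; simpl; unfold Rdiv; apply rc_mult; auto.
  apply (rc_inv (fun s => fst (h s) ^ 2 + snd (h s) ^ 2)); auto.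
  apply rc_opp; auto.
  apply (rc_inv (fun s => fst (h s) ^ 2 + snd (h s) ^ 2)); auto.
Qed.
Lemma Ccont_ext_loc h k x : locally x (fun s => h s = k s) -> Ccont h x -> Ccont k x.
Proof. intros L [H1 H2]; split.
  apply (continuous_ext_loc _ (fun s => fst (h s))); auto.
  apply (filter_imp _ _ (fun s (e : h s = k s) => f_equal fst e) L).
  apply (continuous_ext_loc _ (fun s => snd (h s))); auto.
  apply (filter_imp _ _ (fun s (e : h s = k s) => f_equal snd e) L).
Qed.
Definition contO (O : R -> Prop) (h : R -> C) : Prop := forall y, O y -> Ccont h y.
Fixpoint goodn (n : nat) (O : R -> Prop) (h : R -> C) : Prop :=
  match n with
  | O => contO O h
  | S m => exists h1, (forall y, O y -> CDer h y (h1 y)) /\ goodn m O h1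
  end.

Lemma goodn_cont n O h : goodn n O h -> contO O h.
Proof. destruct n; simpl; auto. intros [h1 [H _]] y Hy. eapply CDer_cont; eauto. Qed.

Lemma goodn_weak n O h : goodn (S n) O h -> goodn n O h.
Proof. revert h; induction n; intros h H.
  - apply (goodn_cont 1); auto.
  - destruct H as [h1 [H1 H2]]. exists h1; split; auto. Qed.

Lemma goodn_const n O c : goodn n O (fun _ => c).
Proof. revert c; induction n; intros c; simpl.
  - intros y _; apply Ccont_const.
  - exists (fun _ => RtoC 0); split; auto. intros; apply CDer_const. Qed.

Lemma goodn_plus n O h k : goodn n O h -> goodn n O k -> goodn n O (fun s => Cplus (h s) (k s)).
Proof. revert h k; induction n; intros h k Hh Hk; simpl in *.
  - intros y Hy; apply Ccont_plus; auto.
  - destruct Hh as [h1 [A1 B1]], Hk as [k1 [A2 B2]].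
    exists (fun y => Cplus (h1 y) (k1 y)); split; auto. intros; apply CDer_plus; auto. Qed.

Lemma goodn_opp n O h : goodn n O h -> goodn n O (fun s => Copp (h s)).
Proof. revert h; induction n; intros h Hh; simpl in *.
  - intros y Hy; apply Ccont_opp; auto.
  - destruct Hh as [h1 [A1 B1]].
    exists (fun y => Copp (h1 y)); split; auto. intros; apply CDer_opp; auto. Qed.

Lemma goodn_minus n O h k : goodn n O h -> goodn n O k -> goodn n O (fun s => Cminus (h s) (k s)).
Proof. intros; apply goodn_plus; auto; apply goodn_opp; auto. Qed.

Lemma goodn_conj n O h : goodn n O h -> goodn n O (fun s => Cconj (h s)).
Proof. revert h; induction n; intros h Hh; simpl in *.
  - intros y Hy; apply Ccont_conj; auto.
  - destruct Hh as [h1 [A1 B1]].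
    exists (fun y => Cconj (h1 y)); split; auto. intros; apply CDer_conj; auto. Qed.

Lemma goodn_Re n O h : goodn n O h -> goodn n O (fun s => RtoC (fst (h s))).
Proof. revert h; induction n; intros h Hh; simpl in *.
  - intros y Hy; apply Ccont_Re; auto.
  - destruct Hh as [h1 [A1 B1]].
    exists (fun y => RtoC (fst (h1 y))); split; auto. intros; apply CDer_Re; auto. Qed.

Lemma goodn_Im n O h : goodn n O h -> goodn n O (fun s => RtoC (snd (h s))).
Proof. revert h; induction n; intros h Hh; simpl in *.
  - intros y Hy; apply Ccont_Im; auto.
  - destruct Hh as [h1 [A1 B1]].
    exists (fun y => RtoC (snd (h1 y))); split; auto. intros; apply CDer_Im; auto. Qed.

Lemma goodn_mult n O h k : goodn n O h -> goodn n O k -> goodn n O (fun s => Cmult (h s) (k s)).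
Proof. revert h k; induction n; intros h k Hh Hk.
  - simpl in *; intros y Hy; apply Ccont_mult; auto.
  - pose proof (goodn_weak _ _ _ Hh) as Wh. pose proof (goodn_weak _ _ _ Hk) as Wk.
    destruct Hh as [h1 [A1 B1]], Hk as [k1 [A2 B2]].
    exists (fun y => Cplus (Cmult (h1 y) (k y)) (Cmult (h y) (k1 y))); split.
    intros; apply CDer_mult; auto.
    apply goodn_plus; apply IHn; auto. Qed.

Lemma Cmult_neq0 (a b : C) : a <> RtoC 0 -> b <> RtoC 0 -> Cmult a b <> RtoC 0.
Proof. intros Ha Hb E. apply Ha. rewrite <- (Cmult_1_r a).
  replace (RtoC 1) with (Cmult b (Cinv b)) by (field; auto).
  rewrite Cmult_assoc, E. ring. Qed.

Lemma goodn_inv n O h : (forall y, O y -> h y <> RtoC 0) -> goodn n O h -> goodn n O (fun s => Cinv (h s)).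
Proof. intros Hn; revert h Hn; induction n; intros h Hn Hh.
  - simpl in *; intros y Hy; apply Ccont_inv; auto.
  - pose proof (goodn_weak _ _ _ Hh) as Wh.
    destruct Hh as [h1 [A1 B1]].
    exists (fun y => Copp (Cmult (h1 y) (Cinv (Cmult (h y) (h y))))); split.
    intros; apply CDer_inv; auto.
    apply goodn_opp, goodn_mult; auto. apply IHn.
    intros; apply Cmult_neq0; auto. apply goodn_mult; auto. Qed.

Lemma goodn_ext n O h k : open O -> (forall y, O y -> h y = k y) -> goodn n O h -> goodn n O k.
Proof. intros Op E. revert h k E; induction n; intros h k E Hh.
  - simpl in *; intros y Hy. apply (Ccont_ext_loc h); auto.
    apply (filter_imp O); auto.
  - destruct Hh as [h1 [A1 B1]]. exists h1; split; auto.
    intros y Hy. apply (CDer_ext_loc h); auto. apply (filter_imp O); auto. Qed.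

Lemma goodn_id n O : goodn n O (fun s => RtoC s).
Proof. destruct n; simpl.
  - intros y _. apply Ccont_RtoC, rc_id.
  - exists (fun _ => RtoC 1); split. intros; apply CDer_RtoC, rd_id. apply goodn_const. Qed.

Lemma goodn_CDf n O h : open O -> goodn (S n) O h -> goodn n O (fun s => CDf h s).
Proof. intros Op [h1 [A B]]. apply (goodn_ext _ _ h1); auto.
  intros; symmetry; apply CDer_unique; auto. Qed.


Lemma Cmod2 (z : C) : Cmod z ^ 2 = fst z ^ 2 + snd z ^ 2.
Proof. unfold Cmod. rewrite pow2_sqrt; auto. nra. Qed.

Lemma rho_expand w : rho w = fst (snd w) ^ 2 + snd (snd w) ^ 2 + fst (fst w) ^ 2 + snd (fst w) ^ 4 - 1.
Proof. unfold rho. rewrite Cmod2. unfold Re, Im. ring. Qed.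

Ltac pdR_tac := unfold pdR;
  match goal with |- Derive (fun s => rho (shift ?k s ?w)) 0 = _ =>
  rewrite (Derive_ext (fun s => rho (shift k s w)) (fun s => fst (snd (shift k s w)) ^ 2 + snd (snd (shift k s w)) ^ 2 + fst (fst (shift k s w)) ^ 2 + snd (fst (shift k s w)) ^ 4 - 1)) by (intro; apply rho_expand) end;
  apply is_derive_unique; simpl; auto_derive; auto; ring.

Lemma pdR_rho0 w : pdR 0 rho w = 2 * fst (fst w).
Proof. pdR_tac. Qed.
Lemma pdR_rho1 w : pdR 1 rho w = 4 * snd (fst w) ^ 3.
Proof. pdR_tac. Qed.
Lemma pdR_rho2 w : pdR 2 rho w = 2 * fst (snd w).
Proof. pdR_tac. Qed.
Lemma pdR_rho3 w : pdR 3 rho w = 2 * snd (snd w).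
Proof. pdR_tac. Qed.

Lemma pdR_im0 k w : pdR k (fun x => Im (rhoC x)) w = 0.
Proof. unfold pdR. simpl. apply Derive_const. Qed.

Lemma rho_d0 w : rho_d 0 w = (fst (fst w), -2 * snd (fst w) ^ 3).
Proof. unfold rho_d, dw. change (2*0)%nat with 0%nat. change (2*0+1)%nat with 1%nat.
  unfold pdC. change (pdR 0 (fun x => Re (rhoC x)) w) with (pdR 0 rho w).
  change (pdR 1 (fun x => Re (rhoC x)) w) with (pdR 1 rho w).
  rewrite pdR_rho0, pdR_rho1, !pdR_im0. apply C_ext; simpl; field. Qed.

Lemma rho_d1 w : rho_d 1 w = (fst (snd w), - snd (snd w)).
Proof. unfold rho_d, dw. change (2*1)%nat with 2%nat. change (2*1+1)%nat with 3%nat.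
  unfold pdC. change (pdR 2 (fun x => Re (rhoC x)) w) with (pdR 2 rho w).
  change (pdR 3 (fun x => Re (rhoC x)) w) with (pdR 3 rho w).
  rewrite pdR_rho2, pdR_rho3, !pdR_im0. apply C_ext; simpl; field. Qed.

Ltac pd_tac := unfold pdR; apply is_derive_unique; simpl; auto_derive; auto; ring.

Lemma rho_ddbar00 w : rho_ddbar 0 0 w = ((1 + 6 * snd (fst w) ^ 2) / 2, 0).
Proof. unfold rho_ddbar, dwbar, pdC. simpl (2*_)%nat. simpl (_+1)%nat.
    rewrite (functional_extensionality (fun x => Re (rho_d 0 x)) (fun x => fst (fst x))) by (intro; rewrite rho_d0; reflexivity).
    rewrite (functional_extensionality (fun x => Im (rho_d 0 x)) (fun x => -2 * snd (fst x) ^ 3)) by (intro; rewrite rho_d0; reflexivity).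
    assert (E1 : pdR 0 (fun x => fst (fst x)) w = 1) by pd_tac.
    assert (E2 : pdR 1 (fun x => fst (fst x)) w = 0) by pd_tac.
    assert (E3 : pdR 0 (fun x : C2 => -2 * snd (fst x) ^ 3) w = 0) by pd_tac.
    assert (E4 : pdR 1 (fun x : C2 => -2 * snd (fst x) ^ 3) w = -6 * snd (fst w) ^ 2) by pd_tac.
    rewrite E1, E2, E3, E4. apply C_ext; simpl; field.
Qed.

Lemma rho_ddbar01 w : rho_ddbar 0 1 w = (0, 0).
Proof. unfold rho_ddbar, dwbar, pdC. simpl (2*_)%nat. simpl (_+1)%nat.
    rewrite (functional_extensionality (fun x => Re (rho_d 0 x)) (fun x => fst (fst x))) by (intro; rewrite rho_d0; reflexivity).
    rewrite (functional_extensionality (fun x => Im (rho_d 0 x)) (fun x => -2 * snd (fst x) ^ 3)) by (intro; rewrite rho_d0; reflexivity).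
    assert (E1 : pdR 2 (fun x => fst (fst x)) w = 0) by pd_tac.
    assert (E2 : pdR 3 (fun x => fst (fst x)) w = 0) by pd_tac.
    assert (E3 : pdR 2 (fun x : C2 => -2 * snd (fst x) ^ 3) w = 0) by pd_tac.
    assert (E4 : pdR 3 (fun x : C2 => -2 * snd (fst x) ^ 3) w = 0) by pd_tac.
    rewrite E1, E2, E3, E4. apply C_ext; simpl; field.
Qed.

Lemma rho_ddbar10 w : rho_ddbar 1 0 w = (0, 0).
Proof. unfold rho_ddbar, dwbar, pdC. simpl (2*_)%nat. simpl (_+1)%nat.
    rewrite (functional_extensionality (fun x => Re (rho_d 1 x)) (fun x => fst (snd x))) by (intro; rewrite rho_d1; reflexivity).
    rewrite (functional_extensionality (fun x => Im (rho_d 1 x)) (fun x => - snd (snd x))) by (intro; rewrite rho_d1; reflexivity).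
    assert (E1 : pdR 0 (fun x => fst (snd x)) w = 0) by pd_tac.
    assert (E2 : pdR 1 (fun x => fst (snd x)) w = 0) by pd_tac.
    assert (E3 : pdR 0 (fun x : C2 => - snd (snd x)) w = 0) by pd_tac.
    assert (E4 : pdR 1 (fun x : C2 => - snd (snd x)) w = 0) by pd_tac.
    rewrite E1, E2, E3, E4. apply C_ext; simpl; field.
Qed.

Lemma rho_ddbar11 w : rho_ddbar 1 1 w = (1, 0).
Proof. unfold rho_ddbar, dwbar, pdC. simpl (2*_)%nat. simpl (_+1)%nat.
    rewrite (functional_extensionality (fun x => Re (rho_d 1 x)) (fun x => fst (snd x))) by (intro; rewrite rho_d1; reflexivity).
    rewrite (functional_extensionality (fun x => Im (rho_d 1 x)) (fun x => - snd (snd x))) by (intro; rewrite rho_d1; reflexivity).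
    assert (E1 : pdR 2 (fun x => fst (snd x)) w = 1) by pd_tac.
    assert (E2 : pdR 3 (fun x => fst (snd x)) w = 0) by pd_tac.
    assert (E3 : pdR 2 (fun x : C2 => - snd (snd x)) w = 0) by pd_tac.
    assert (E4 : pdR 3 (fun x : C2 => - snd (snd x)) w = -1) by pd_tac.
    rewrite E1, E2, E3, E4. apply C_ext; simpl; field.
Qed.


Lemma unit_rows (a b c d : C) : unitary2 ((a, b), (c, d)) ->
  Cplus (Cmult a (Cconj a)) (Cmult b (Cconj b)) = RtoC 1 /\
  Cplus (Cmult c (Cconj c)) (Cmult d (Cconj d)) = RtoC 1 /\
  Cplus (Cmult a (Cconj c)) (Cmult b (Cconj d)) = RtoC 0.
Proof.
  simpl. intros [H1 [H2 H3]].
  assert (H3' : Cplus (Cmult a (Cconj b)) (Cmult c (Cconj d)) = RtoC 0).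
  { apply (f_equal Cconj) in H3. rewrite Cplus_conj, !Cmult_conj, !Cconj_conj in H3.
    rewrite H3. apply C_ext; simpl; ring. }
  assert (Ec : Cmult (Cconj c) c = Cminus (RtoC 1) (Cmult (Cconj a) a)) by (rewrite <- H1; ring).
  assert (Ed : Cmult (Cconj d) d = Cminus (RtoC 1) (Cmult (Cconj b) b)) by (rewrite <- H2; ring).
  assert (Ecd : Cmult (Cconj c) d = Copp (Cmult (Cconj a) b)).
  { replace (Cmult (Cconj c) d) with (Cminus (Cplus (Cmult (Cconj a) b) (Cmult (Cconj c) d)) (Cmult (Cconj a) b)) by ring.
    rewrite H3; ring. }
  assert (Ecd' : Cmult c (Cconj d) = Copp (Cmult a (Cconj b))).
  { replace (Cmult c (Cconj d)) with (Cminus (Cplus (Cmult a (Cconj b)) (Cmult c (Cconj d))) (Cmult a (Cconj b))) by ring.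
    rewrite H3'; ring. }
  assert (E : Cmult (Cmult (Cconj c) c) (Cmult (Cconj d) d) = Cmult (Cmult (Cconj a) a) (Cmult (Cconj b) b)).
  { replace (Cmult (Cmult (Cconj c) c) (Cmult (Cconj d) d)) with (Cmult (Cmult (Cconj c) d) (Cmult c (Cconj d))) by ring.
    rewrite Ecd, Ecd'. ring. }
  rewrite Ec, Ed in E.
  assert (G1 : Cplus (Cmult a (Cconj a)) (Cmult b (Cconj b)) = RtoC 1).
  { replace (Cplus (Cmult a (Cconj a)) (Cmult b (Cconj b))) with
      (Cminus (RtoC 1) (Cminus (Cmult (Cminus (RtoC 1) (Cmult (Cconj a) a)) (Cminus (RtoC 1) (Cmult (Cconj b) b)))
        (Cmult (Cmult (Cconj a) a) (Cmult (Cconj b) b)))) by ring.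
    rewrite E. ring. }
  split; [exact G1|split].
  - replace (Cplus (Cmult c (Cconj c)) (Cmult d (Cconj d))) with
      (Cplus (Cmult (Cconj c) c) (Cmult (Cconj d) d)) by ring.
    rewrite Ec, Ed. replace (RtoC 1) with (Cplus (RtoC 1) (Cminus (RtoC 1) (Cplus (Cmult a (Cconj a)) (Cmult b (Cconj b))))) at 3 by (rewrite G1; ring).
    ring.
  - set (w := Cplus (Cmult a (Cconj c)) (Cmult b (Cconj d))).
    assert (Ew : Cmult w (Cconj w) = RtoC 0).
    { unfold w. rewrite Cplus_conj, !Cmult_conj, !Cconj_conj.
      replace (Cmult (Cplus (Cmult a (Cconj c)) (Cmult b (Cconj d))) (Cplus (Cmult (Cconj a) c) (Cmult (Cconj b) d)))
        with (Cplus (Cplus (Cmult (Cmult a (Cconj a)) (Cmult (Cconj c) c)) (Cmult (Cmult b (Cconj b)) (Cmult (Cconj d) d)))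
               (Cplus (Cmult (Cmult a (Cconj b)) (Cmult (Cconj c) d)) (Cmult (Cmult (Cconj a) b) (Cmult c (Cconj d))))) by ring.
      rewrite Ecd, Ecd', Ec, Ed.
      replace (Cmult b (Cconj b)) with (Cminus (RtoC 1) (Cmult a (Cconj a))) by (rewrite <- G1; ring).
      replace (Cmult (Cconj b) b) with (Cminus (RtoC 1) (Cmult a (Cconj a))) by (rewrite <- G1; ring).
      replace (Cmult (Cconj a) b) with (Cmult b (Cconj a)) by ring.
      replace (Cmult (Cmult b (Cconj a)) (Copp (Cmult a (Cconj b)))) with (Copp (Cmult (Cmult a (Cconj a)) (Cmult b (Cconj b)))) by ring.
      replace (Cmult (Cmult a (Cconj b)) (Copp (Cmult b (Cconj a)))) with (Copp (Cmult (Cmult a (Cconj a)) (Cmult b (Cconj b)))) by ring.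
      replace (Cmult b (Cconj b)) with (Cminus (RtoC 1) (Cmult a (Cconj a))) by (rewrite <- G1; ring).
      replace (Cmult (Cconj a) a) with (Cmult a (Cconj a)) by ring.
      ring. }
    rewrite <- Cmod2_conj in Ew.
    destruct w as [u v]. apply (f_equal fst) in Ew. simpl in Ew. repeat rewrite Rmult_1_r in Ew.
    apply Cmod_eq_0. nra.
Qed.

Lemma to_from zeta a b c d w : unitary2 ((a, b), (c, d)) ->
  to_loc zeta ((a, b), (c, d)) (from_loc zeta ((a, b), (c, d)) w) = w.
Proof. intros HU. destruct (unit_rows _ _ _ _ HU) as [R1 [R2 R3]].
  assert (R4 : Cplus (Cmult c (Cconj a)) (Cmult d (Cconj b)) = RtoC 0).
  { apply (f_equal Cconj) in R3. rewrite Cplus_conj, !Cmult_conj, !Cconj_conj in R3.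
    rewrite (Cmult_comm c), (Cmult_comm d), R3. apply C_ext; simpl; ring. }
  destruct w as [p q]. simpl. f_equal.
  - transitivity (Cplus (Cmult (Cplus (Cmult a (Cconj a)) (Cmult b (Cconj b))) p) (Cmult (Cplus (Cmult a (Cconj c)) (Cmult b (Cconj d))) q)); [ring|rewrite R1, R3; ring].
  - transitivity (Cplus (Cmult (Cplus (Cmult c (Cconj a)) (Cmult d (Cconj b))) p) (Cmult (Cplus (Cmult c (Cconj c)) (Cmult d (Cconj d))) q)); [ring|rewrite R2, R4; ring].
Qed.

Lemma RtoC_inj (x y : R) : RtoC x = RtoC y -> x = y.
Proof. intros H; apply (f_equal fst) in H; exact H. Qed.

Lemma dist_from zeta a b c d w : unitary2 ((a, b), (c, d)) ->
  dist2 (from_loc zeta ((a, b), (c, d)) w) zeta = sqrt (Cmod (fst w) ^ 2 + Cmod (snd w) ^ 2).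
Proof. intros HU. destruct (unit_rows _ _ _ _ HU) as [R1 [R2 R3]].
  assert (R4 : Cplus (Cmult (Cconj a) c) (Cmult (Cconj b) d) = RtoC 0).
  { apply (f_equal Cconj) in R3. rewrite Cplus_conj, !Cmult_conj, !Cconj_conj in R3.
    rewrite R3. apply C_ext; simpl; ring. }
  destruct w as [p q]. unfold dist2. f_equal. apply RtoC_inj.
  rewrite !RtoC_plus, !Cmod2_conj. simpl fst; simpl snd.
  rewrite !Cminus_conj, !Cplus_conj, !Cmult_conj, !Cconj_conj.
  transitivity (Cplus (Cplus (Cmult (Cmult p (Cconj p)) (Cplus (Cmult a (Cconj a)) (Cmult b (Cconj b))))
                             (Cmult (Cmult q (Cconj q)) (Cplus (Cmult c (Cconj c)) (Cmult d (Cconj d)))))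
                      (Cplus (Cmult (Cmult p (Cconj q)) (Cplus (Cmult (Cconj a) c) (Cmult (Cconj b) d)))
                             (Cmult (Cmult q (Cconj p)) (Cplus (Cmult a (Cconj c)) (Cmult b (Cconj d)))))).
  - ring.
  - rewrite R1, R2, R3, R4. ring.
Qed.

Lemma exCD_CDer h x : ex_CD h x -> CDer h x (CD h x).
Proof. intros [H1 H2]; split; apply Derive_correct; auto. Qed.

Lemma cont3 (F : R*R*R -> C) t1 t2 y : continuous F (t1,t2,y) ->
  Ccont (fun s => F (t1,t2,s)) y.
Proof. intros H.
  assert (Hp : continuous (fun s : R => (t1,t2,s)) y).
  { apply (continuous_comp_2 (fun _ : R => (t1,t2)) (fun s : R => s) (fun a b => (a,b))).
    apply continuous_const. apply continuous_id.
    apply (continuous_ext (fun p => p)). intros [u v]; reflexivity. apply continuous_id. }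
  split.
  - apply (continuous_comp (fun s => F (t1,t2,s)) (fun z : C => fst z)).
    apply (continuous_comp (fun s : R => (t1,t2,s)) F); auto.
    destruct (F (t1,t2,y)) as [u v]. apply (continuous_fst (U:=R_UniformSpace) (V:=R_UniformSpace) u v).
  - apply (continuous_comp (fun s => F (t1,t2,s)) (fun z : C => snd z)).
    apply (continuous_comp (fun s : R => (t1,t2,s)) F); auto.
    destruct (F (t1,t2,y)) as [u v]. apply (continuous_snd (U:=R_UniformSpace) (V:=R_UniformSpace) u v).
Qed.

Lemma C1_atom (V : R -> R -> R -> Prop) G t1 t2 : C1_on V G -> open (fun s => V t1 t2 s) ->
  goodn 1 (fun s => V t1 t2 s) (fun s => G t1 t2 s).
Proof. intros H Op. exists (fun s => pt 2 G t1 t2 s). split.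
  - intros y Hy. destruct (H t1 t2 y Hy 2%nat ltac:(lia)) as [E _]. apply exCD_CDer; exact E.
  - simpl. intros y Hy. destruct (H t1 t2 y Hy 2%nat ltac:(lia)) as [_ Cn].
    apply (cont3 (fun p : R*R*R => pt 2 G (fst (fst p)) (snd (fst p)) (snd p))). exact Cn.
Qed.

Lemma C2_atom (V : R -> R -> R -> Prop) G t1 t2 : C2_on V G -> open (fun s => V t1 t2 s) ->
  goodn 2 (fun s => V t1 t2 s) (fun s => G t1 t2 s).
Proof. intros [H H2] Op. exists (fun s => pt 2 G t1 t2 s). split.
  - intros y Hy. destruct (H t1 t2 y Hy 2%nat ltac:(lia)) as [E _]. apply exCD_CDer; exact E.
  - apply (C1_atom V (pt 2 G)); auto.
Qed.

Lemma C2_atom_k (V : R -> R -> R -> Prop) G t1 t2 k : C2_on V G -> (k < 3)%nat -> open (fun s => V t1 t2 s) ->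
  goodn 1 (fun s => V t1 t2 s) (fun s => pt k G t1 t2 s).
Proof. intros [H H2] Hk Op. apply (C1_atom V (pt k G)); auto. Qed.

Definition alpha (a b : C) (j : nat) : C := match j with 0%nat => a | _ => b end.

Lemma ccoord_from zeta a b c d j w : ccoord j (from_loc zeta ((a,b),(c,d)) w) =
  Cplus (ccoord j zeta) (Cplus (Cmult (Cconj (alpha a b j)) (fst w)) (Cmult (Cconj (alpha c d j)) (snd w))).
Proof. destruct w; destruct j; reflexivity. Qed.

Definition gPhi (Phi : R -> R -> R -> R) : R -> R -> R -> C := fun t1 t2 t3 => RtoC (Phi t1 t2 t3).

Definition Wform (a b c d : C) (j m : nat) (P : R) : C :=
  match m with
  | 0%nat => Cplus (Cconj (alpha a b j)) (Cmult (Cconj (alpha c d j)) (Cmult Ci (RtoC P)))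
  | 1%nat => Cplus (Cmult (Cconj (alpha a b j)) Ci) (Cmult (Cconj (alpha c d j)) (Cmult Ci (RtoC P)))
  | _ => Cmult (Cconj (alpha c d j)) (Cplus (RtoC 1) (Cmult Ci (RtoC P)))
  end.

Lemma CD_eq h x d : CDer h x d -> CD h x = d.
Proof. apply CDer_unique. Qed.


Lemma W_CDer0 zeta a b c d Phi t1 t2 t3 j
  (HP : ex_pt 0 (gPhi Phi) t1 t2 t3) :
  CDer (fun x => ccoord j (psi zeta ((a,b),(c,d)) Phi x t2 t3)) t1
  (Wform a b c d j 0 (fst (pt 0 (gPhi Phi) t1 t2 t3))).
Proof.
  unfold ex_pt in HP. apply exCD_CDer in HP. destruct HP as [HP _].
  apply (CDer_ext_loc (fun x => Cplus (ccoord j zeta) (Cplus (Cmult (Cconj (alpha a b j)) (Cplus (RtoC x) (Cmult Ci (RtoC t2)))) (Cmult (Cconj (alpha c d j)) (Cplus (RtoC t3) (Cmult Ci (RtoC (Phi x t2 t3)))))))).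
  apply filter_forall. intro x. unfold psi. rewrite ccoord_from. reflexivity.
  eapply CDer_eq.
  { apply CDer_plus. apply CDer_const. apply CDer_plus; apply CDer_mult.
    apply CDer_const. apply CDer_plus. apply CDer_RtoC, rd_id. apply CDer_const.
    apply CDer_const. apply CDer_plus. apply CDer_const. apply CDer_mult. apply CDer_const.
    apply CDer_RtoC. exact HP. }
  simpl Wform. apply C_ext; simpl; ring.
Qed.

Lemma W_CDer1 zeta a b c d Phi t1 t2 t3 j
  (HP : ex_pt 1 (gPhi Phi) t1 t2 t3) :
  CDer (fun x => ccoord j (psi zeta ((a,b),(c,d)) Phi t1 x t3)) t2
  (Wform a b c d j 1 (fst (pt 1 (gPhi Phi) t1 t2 t3))).
Proof.
  unfold ex_pt in HP. apply exCD_CDer in HP. destruct HP as [HP _].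
  apply (CDer_ext_loc (fun x => Cplus (ccoord j zeta) (Cplus (Cmult (Cconj (alpha a b j)) (Cplus (RtoC t1) (Cmult Ci (RtoC x)))) (Cmult (Cconj (alpha c d j)) (Cplus (RtoC t3) (Cmult Ci (RtoC (Phi t1 x t3)))))))).
  apply filter_forall. intro x. unfold psi. rewrite ccoord_from. reflexivity.
  eapply CDer_eq.
  { apply CDer_plus. apply CDer_const. apply CDer_plus; apply CDer_mult.
    apply CDer_const. apply CDer_plus. apply CDer_const. apply CDer_mult. apply CDer_const. apply CDer_RtoC, rd_id.
    apply CDer_const. apply CDer_plus. apply CDer_const. apply CDer_mult. apply CDer_const.
    apply CDer_RtoC. exact HP. }
  simpl Wform. apply C_ext; simpl; ring.
Qed.

Lemma W_CDer2 zeta a b c d Phi t1 t2 t3 j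
  (HP : ex_pt 2 (gPhi Phi) t1 t2 t3) :
  CDer (fun x => ccoord j (psi zeta ((a,b),(c,d)) Phi t1 t2 x)) t3
  (Wform a b c d j 2 (fst (pt 2 (gPhi Phi) t1 t2 t3))).
Proof.
  unfold ex_pt in HP. apply exCD_CDer in HP. destruct HP as [HP _].
  apply (CDer_ext_loc (fun x => Cplus (ccoord j zeta) (Cplus (Cmult (Cconj (alpha a b j)) (Cplus (RtoC t1) (Cmult Ci (RtoC t2)))) (Cmult (Cconj (alpha c d j)) (Cplus (RtoC x) (Cmult Ci (RtoC (Phi t1 t2 x)))))))).
  apply filter_forall. intro x. unfold psi. rewrite ccoord_from. reflexivity.
  eapply CDer_eq.
  { apply CDer_plus. apply CDer_const. apply CDer_plus; apply CDer_mult.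
    apply CDer_const. apply CDer_const.
    apply CDer_const. apply CDer_plus. apply CDer_RtoC, rd_id. apply CDer_mult. apply CDer_const.
    apply CDer_RtoC. exact HP. }
  simpl Wform. apply C_ext; simpl; ring.
Qed.

Lemma W_pt zeta a b c d Phi t1 t2 t3 j m (Hm : (m < 3)%nat)
  (HP : ex_pt m (gPhi Phi) t1 t2 t3) :
  pt m (fun x y z => ccoord j (psi zeta ((a,b),(c,d)) Phi x y z)) t1 t2 t3 =
  Wform a b c d j m (fst (pt m (gPhi Phi) t1 t2 t3)) /\
  pt m (fun x y z => Cconj (ccoord j (psi zeta ((a,b),(c,d)) Phi x y z))) t1 t2 t3 =
  Cconj (Wform a b c d j m (fst (pt m (gPhi Phi) t1 t2 t3))).
Proof.
  destruct m as [|[|[|m]]]; [| | |exfalso; lia].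
  - apply (W_CDer0 zeta a b c d Phi t1 t2 t3 j) in HP.
    split; apply CD_eq; auto. apply (CDer_conj _ _ _ HP).
  - apply (W_CDer1 zeta a b c d Phi t1 t2 t3 j) in HP.
    split; apply CD_eq; auto. apply (CDer_conj _ _ _ HP).
  - apply (W_CDer2 zeta a b c d Phi t1 t2 t3 j) in HP.
    split; apply CD_eq; auto. apply (CDer_conj _ _ _ HP).
Qed.

Lemma fst_xy (x y : R) : fst (Cplus (RtoC x) (Cmult Ci (RtoC y))) = x.
Proof. simpl; ring. Qed.
Lemma snd_xy (x y : R) : snd (Cplus (RtoC x) (Cmult Ci (RtoC y))) = y.
Proof. simpl; ring. Qed.

Lemma psi_loc zeta a b c d Phi t1 t2 t3 : unitary2 ((a,b),(c,d)) ->
  to_loc zeta ((a,b),(c,d)) (psi zeta ((a,b),(c,d)) Phi t1 t2 t3) =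
  (Cplus (RtoC t1) (Cmult Ci (RtoC t2)), Cplus (RtoC t3) (Cmult Ci (RtoC (Phi t1 t2 t3)))).
Proof. intros; unfold psi; apply to_from; auto. Qed.

Lemma dist_xy zeta a b c d t1 t2 x v : unitary2 ((a,b),(c,d)) ->
  dist2 (from_loc zeta ((a,b),(c,d)) (Cplus (RtoC t1) (Cmult Ci (RtoC t2)), Cplus (RtoC x) (Cmult Ci (RtoC v)))) zeta
  = sqrt (t1 ^ 2 + t2 ^ 2 + x ^ 2 + v ^ 2).
Proof. intros HU; rewrite dist_from; auto. f_equal. rewrite !Cmod2. simpl; ring. Qed.

Lemma dist_psi zeta a b c d Phi t1 t2 t3 : unitary2 ((a,b),(c,d)) ->
  dist2 (psi zeta ((a,b),(c,d)) Phi t1 t2 t3) zeta = sqrt (t1 ^ 2 + t2 ^ 2 + t3 ^ 2 + Phi t1 t2 t3 ^ 2).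
Proof. intros; unfold psi; apply dist_xy; auto. Qed.

Lemma rho_psi zeta a b c d Phi delta t1 t2 t3 : unitary2 ((a,b),(c,d)) ->
  (forall w, dist2 w zeta < delta ->
     (rho w = 0 <-> Im (snd (to_loc zeta ((a,b),(c,d)) w)) =
        Phi (Re (fst (to_loc zeta ((a,b),(c,d)) w))) (Im (fst (to_loc zeta ((a,b),(c,d)) w)))
            (Re (snd (to_loc zeta ((a,b),(c,d)) w))))) ->
  chart_dom zeta ((a,b),(c,d)) Phi delta t1 t2 t3 ->
  rho (psi zeta ((a,b),(c,d)) Phi t1 t2 t3) = 0.
Proof. intros HU Hg Hd. apply (Hg _ Hd). rewrite psi_loc by auto. unfold Re, Im. simpl fst; simpl snd.
  simpl. replace (0 + (0*0+1*Phi t1 t2 t3)) with (Phi t1 t2 t3) by ring. f_equal; ring. Qed.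

Lemma Delta_neq0 w z : rho w = 0 -> rho z < 0 -> LDelta w z <> RtoC 0.
Proof. intros Hw Hz E. unfold LDelta, sum2 in E. rewrite rho_d0, rho_d1 in E.
  apply (f_equal fst) in E. rewrite rho_expand in Hw, Hz.
  destruct w as [[u1 v1] [u2 v2]], z as [[x1 y1] [x2 y2]]. simpl in *.
  assert (K : 0 <= (v1 - y1) ^ 2 * (2 * v1 ^ 2 + (v1 + y1) ^ 2)).
  { apply Rmult_le_pos. apply pow2_ge_0. pose proof (pow2_ge_0 v1); pose proof (pow2_ge_0 (v1+y1)); lra. }
  pose proof (pow2_ge_0 (u1 - x1)); pose proof (pow2_ge_0 (u2 - x2)); pose proof (pow2_ge_0 (v2 - y2)).
  lra.
Qed.

Lemma O_open zeta a b c d Phi delta t1 t2 : unitary2 ((a,b),(c,d)) ->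
  C2_on (chart_dom zeta ((a,b),(c,d)) Phi delta) (fun t1 t2 t3 => RtoC (Phi t1 t2 t3)) ->
  open (fun s => chart_dom zeta ((a,b),(c,d)) Phi delta t1 t2 s).
Proof. intros HU [H1 _] s Hs.
  destruct (H1 t1 t2 s Hs 2%nat ltac:(lia)) as [[Hd _] _]. simpl in Hd.
  assert (Hc : continuous (fun s => Phi t1 t2 s) s).
  { apply (ex_derive_continuous (K:=R_AbsRing) (V:=R_NormedModule)). exact Hd. }
  set (f := fun s => sqrt (t1 ^ 2 + t2 ^ 2 + s ^ 2 + Phi t1 t2 s ^ 2)).
  assert (Cf : continuous f s).
  { unfold f. apply continuous_sqrt_comp. simpl.
    apply rc_plus. apply rc_plus. apply rc_const. apply rc_mult. apply rc_id. apply rc_mult. apply rc_id. apply rc_const.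
    apply rc_mult. auto. apply rc_mult. auto. apply rc_const. }
  assert (Lf : locally (f s) (fun y => y < delta)).
  { apply open_lt. unfold f; rewrite <- (dist_psi zeta a b c d Phi t1 t2 s HU). exact Hs. }
  specialize (Cf _ Lf). simpl in Cf.
  apply (filter_imp (fun x => f x < delta)); auto.
  intros x Hx. unfold chart_dom. rewrite dist_psi by auto. exact Hx.
Qed.

Lemma rc_pow {T : UniformSpace} (f : T -> R) x n : continuous f x -> continuous (fun y => f y ^ n) x.
Proof. intros H; induction n; simpl. apply rc_const. apply rc_mult; auto. Qed.
Lemma rc_fst2 (p : R * R) : continuous (fun q : R * R => fst q) p.
Proof. destruct p; apply (continuous_fst (U:=R_UniformSpace) (V:=R_UniformSpace)). Qed.
Lemma rc_snd2 (p : R * R) : continuous (fun q : R * R => snd q) p.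
Proof. destruct p; apply (continuous_snd (U:=R_UniformSpace) (V:=R_UniformSpace)). Qed.

Lemma epsdelta (K : R * R -> R) s l : continuous K (s, l) ->
  forall e, 0 < e -> exists eta, 0 < eta /\ forall x v, Rabs (x - s) < eta -> Rabs (v - l) < eta ->
  Rabs (K (x, v) - K (s, l)) < e.
Proof. intros H e He.
  assert (L : locally (K (s,l)) (ball (K (s,l)) e)) by (apply (locally_ball _ (mkposreal e He))).
  specialize (H _ L). destruct H as [eta Heta]. exists eta. split; [apply cond_pos|].
  intros x v Hx Hv. specialize (Heta (x, v)). simpl in Heta.
  assert (B : ball (s, l) eta (x, v)) by (split; assumption).
  specialize (Heta B). exact Heta.
Qed.

Lemma lim_le (K : R * R -> R) s l (sn vn : nat -> R) c :
  continuous K (s, l) -> (forall n, Rabs (sn n - s) < / (INR n + 1)) -> ValAdh vn l ->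
  (forall n, K (sn n, vn n) <= c) -> K (s, l) <= c.
Proof. intros HK Hs Hv Hc. destruct (Rle_lt_dec (K (s,l)) c) as [h|h]; auto. exfalso.
  destruct (epsdelta K s l HK (K (s,l) - c) ltac:(lra)) as [eta [Heta He]].
  destruct (archimed_cor1 eta Heta) as [N [HN1 HN2]].
  assert (HNp : 0 < INR N) by (apply lt_0_INR; lia).
  destruct (Hv (disc l (mkposreal eta Heta)) N) as [p [Hp1 Hp2]].
  { exists (mkposreal eta Heta). intros y Hy; exact Hy. }
  unfold disc in Hp2; simpl in Hp2.
  assert (Hsp : Rabs (sn p - s) < eta).
  { apply Rlt_le_trans with (/ (INR p + 1)); auto. apply Rle_trans with (/ INR N); [|lra].
    apply Rinv_le_contravar; auto. apply le_INR in Hp1. lra. }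
  specialize (He _ _ Hsp Hp2). specialize (Hc p).
  apply Rabs_def2 in He. lra.
Qed.


Ltac rcont := repeat match goal with
 | |- continuous (fun _ => _ + _) _ => apply rc_plus
 | |- continuous (fun _ => _ - _) _ => apply rc_minus
 | |- continuous (fun _ => _ * _) _ => apply rc_mult
 | |- continuous (fun _ => - _) _ => apply rc_opp
 | |- continuous (fun _ => _ ^ _) _ => apply rc_pow
 | |- continuous (fun q => fst q) _ => apply rc_fst2
 | |- continuous fst _ => apply rc_fst2
 | |- continuous snd _ => apply rc_snd2
 | |- continuous (fun q => snd q) _ => apply rc_snd2
 | |- continuous (fun _ => ?c) _ => apply rc_const
end.

Lemma closure_lem zeta a b c d Phi delta r t1 t2 s : unitary2 ((a,b),(c,d)) ->
  (forall w, dist2 w zeta < delta ->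
     (rho w = 0 <-> Im (snd (to_loc zeta ((a,b),(c,d)) w)) =
        Phi (Re (fst (to_loc zeta ((a,b),(c,d)) w))) (Im (fst (to_loc zeta ((a,b),(c,d)) w)))
            (Re (snd (to_loc zeta ((a,b),(c,d)) w))))) ->
  r < delta ->
  ~ chart_dom zeta ((a,b),(c,d)) Phi delta t1 t2 s ->
  exists eps, 0 < eps /\ forall s', Rabs (s' - s) < eps ->
    chart_dom zeta ((a,b),(c,d)) Phi delta t1 t2 s' ->
    r <= dist2 (psi zeta ((a,b),(c,d)) Phi t1 t2 s') zeta.
Proof. intros HU Hg Hr Hs. apply NNPP; intro Hn.
  assert (Hall : forall n : nat, exists s', Rabs (s' - s) < / (INR n + 1) /\
     chart_dom zeta ((a,b),(c,d)) Phi delta t1 t2 s' /\ dist2 (psi zeta ((a,b),(c,d)) Phi t1 t2 s') zeta < r).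
  { intro n. apply NNPP; intro Hn2. apply Hn. exists (/ (INR n + 1)). split.
    apply Rinv_0_lt_compat. pose proof (pos_INR n); lra.
    intros s' H1 H2. apply Rnot_lt_le. intro H3. apply Hn2. eauto. }
  set (sn := fun n => proj1_sig (constructive_indefinite_description _ (Hall n))).
  assert (Hsn : forall n, Rabs (sn n - s) < / (INR n + 1) /\
     chart_dom zeta ((a,b),(c,d)) Phi delta t1 t2 (sn n) /\ dist2 (psi zeta ((a,b),(c,d)) Phi t1 t2 (sn n)) zeta < r).
  { intro n. unfold sn. destruct (constructive_indefinite_description _ (Hall n)) as [x Hx]. exact Hx. }
  set (vn := fun n => Phi t1 t2 (sn n)).
  assert (Hb : forall n, t1 ^ 2 + t2 ^ 2 + sn n ^ 2 + vn n ^ 2 < r ^ 2 /\ 0 < r).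
  { intro n. destruct (Hsn n) as [_ [_ H]]. rewrite dist_psi in H by auto. fold (vn n) in H.
    set (X := t1 ^ 2 + t2 ^ 2 + sn n ^ 2 + vn n ^ 2) in *.
    assert (0 <= X) by (unfold X; nra). pose proof (sqrt_pos X). pose proof (sqrt_sqrt X H0).
    split; nra. }
  assert (r0 : 0 < r) by apply (Hb 0%nat).
  assert (Hin : forall n, -r <= vn n <= r).
  { intro n. destruct (Hb n) as [H _]. split; nra. }
  destruct (Bolzano_Weierstrass vn (fun c => -r <= c <= r) (compact_P3 _ _) Hin) as [l Hl].
  set (K1 := fun p : R * R => rho (from_loc zeta ((a,b),(c,d)) (Cplus (RtoC t1) (Cmult Ci (RtoC t2)), Cplus (RtoC (fst p)) (Cmult Ci (RtoC (snd p)))))).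
  set (K3 := fun p : R * R => t1 ^ 2 + t2 ^ 2 + fst p ^ 2 + snd p ^ 2).
  assert (C1 : continuous K1 (s, l)).
  { apply (continuous_ext (fun p : R * R => fst (snd (from_loc zeta ((a,b),(c,d)) (Cplus (RtoC t1) (Cmult Ci (RtoC t2)), Cplus (RtoC (fst p)) (Cmult Ci (RtoC (snd p)))))) ^ 2 +
       snd (snd (from_loc zeta ((a,b),(c,d)) (Cplus (RtoC t1) (Cmult Ci (RtoC t2)), Cplus (RtoC (fst p)) (Cmult Ci (RtoC (snd p)))))) ^ 2 +
       fst (fst (from_loc zeta ((a,b),(c,d)) (Cplus (RtoC t1) (Cmult Ci (RtoC t2)), Cplus (RtoC (fst p)) (Cmult Ci (RtoC (snd p)))))) ^ 2 +
       snd (fst (from_loc zeta ((a,b),(c,d)) (Cplus (RtoC t1) (Cmult Ci (RtoC t2)), Cplus (RtoC (fst p)) (Cmult Ci (RtoC (snd p)))))) ^ 4 - 1)).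
    intro p. unfold K1. symmetry. apply rho_expand.
    unfold from_loc. simpl. rcont. }
  assert (C2 : continuous (fun p => - K1 p) (s, l)) by (apply rc_opp; auto).
  assert (C3 : continuous K3 (s, l)) by (unfold K3; rcont).
  assert (E1 : forall n, K1 (sn n, vn n) = 0).
  { intro n. destruct (Hsn n) as [_ [H _]]. unfold K1; simpl fst; simpl snd.
    apply (rho_psi zeta a b c d Phi delta t1 t2 (sn n) HU Hg H). }
  assert (L1 : K1 (s, l) <= 0) by (apply (lim_le K1 s l sn vn); auto; [apply Hsn | intro n; rewrite E1; lra]).
  assert (L2 : - K1 (s, l) <= 0) by (apply (lim_le (fun p => - K1 p) s l sn vn); auto; [apply Hsn | intro n; rewrite E1; lra]).
  assert (L3 : K3 (s, l) <= r ^ 2) by (apply (lim_le K3 s l sn vn); auto; [apply Hsn | intro n; unfold K3; simpl fst; simpl snd; left; apply Hb]).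
  set (ws := from_loc zeta ((a,b),(c,d)) (Cplus (RtoC t1) (Cmult Ci (RtoC t2)), Cplus (RtoC s) (Cmult Ci (RtoC l)))).
  assert (Dws : dist2 ws zeta < delta).
  { unfold ws. rewrite dist_xy by auto. unfold K3 in L3; simpl in L3.
    apply Rle_lt_trans with r; auto. rewrite <- (sqrt_pow2 r) by lra. apply sqrt_le_1_alt. simpl; lra. }
  assert (Rws : rho ws = 0) by (change (rho ws) with (K1 (s,l)); lra).
  assert (Hlp : l = Phi t1 t2 s).
  { apply (Hg ws Dws) in Rws. unfold ws in Rws. rewrite to_from in Rws by auto. simpl in Rws.
    replace (0 + (0*0+1*l)) with l in Rws by ring. rewrite Rws. f_equal; ring. }
  apply Hs. unfold chart_dom. rewrite dist_psi by auto. rewrite <- Hlp.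
  apply Rle_lt_trans with r; auto. rewrite <- (sqrt_pow2 r) by lra. apply sqrt_le_1_alt. unfold K3 in L3; simpl in L3 |- *; lra.
Qed.

Ltac gtac := repeat match goal with
 | |- goodn _ _ (fun _ => ?c) => apply goodn_const
 | |- goodn _ _ (fun _ => Cplus _ _) => apply goodn_plus
 | |- goodn _ _ (fun _ => Cminus _ _) => apply goodn_minus
 | |- goodn _ _ (fun _ => Cmult _ _) => apply goodn_mult
 | |- goodn _ _ (fun _ => Copp _) => apply goodn_opp
 | |- goodn _ _ (fun _ => Cconj _) => apply goodn_conj
 | |- goodn _ _ (fun s => RtoC s) => apply goodn_id
 | |- goodn _ _ RtoC => apply goodn_id
 | |- goodn _ _ _ => assumption
 | |- goodn _ _ (fun s => RtoC (fst _)) => apply goodn_Re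
 | |- goodn _ _ (fun s => RtoC (snd _)) => apply goodn_Im
 end.


Lemma atom_psi zeta a b c d Phi delta t1 t2 j : unitary2 ((a,b),(c,d)) ->
  C2_on (chart_dom zeta ((a,b),(c,d)) Phi delta) (fun t1 t2 t3 => RtoC (Phi t1 t2 t3)) ->
  goodn 2 (fun s => chart_dom zeta ((a,b),(c,d)) Phi delta t1 t2 s) (fun s => ccoord j (psi zeta ((a,b),(c,d)) Phi t1 t2 s)).
Proof. intros HU HP. pose proof (O_open zeta a b c d Phi delta t1 t2 HU HP) as Op.
  assert (A : goodn 2 (fun s => chart_dom zeta ((a,b),(c,d)) Phi delta t1 t2 s) (fun s => RtoC (Phi t1 t2 s)))
    by (apply (C2_atom _ _ t1 t2 HP Op)).
  apply (goodn_ext _ _ (fun s => Cplus (ccoord j zeta) (Cplus (Cmult (Cconj (alpha a b j)) (Cplus (RtoC t1) (Cmult Ci (RtoC t2)))) (Cmult (Cconj (alpha c d j)) (Cplus (RtoC s) (Cmult Ci (RtoC (Phi t1 t2 s)))))))); auto.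
  intros; unfold psi; rewrite ccoord_from; reflexivity.
  gtac.
Qed.

Lemma atom_rho_d zeta a b c d Phi delta t1 t2 j : unitary2 ((a,b),(c,d)) ->
  C2_on (chart_dom zeta ((a,b),(c,d)) Phi delta) (fun t1 t2 t3 => RtoC (Phi t1 t2 t3)) ->
  (j < 2)%nat ->
  goodn 2 (fun s => chart_dom zeta ((a,b),(c,d)) Phi delta t1 t2 s) (fun s => rho_d j (psi zeta ((a,b),(c,d)) Phi t1 t2 s)).
Proof. intros HU HP Hj. pose proof (O_open zeta a b c d Phi delta t1 t2 HU HP) as Op.
  pose proof (atom_psi zeta a b c d Phi delta t1 t2 0 HU HP) as A0.
  pose proof (atom_psi zeta a b c d Phi delta t1 t2 1 HU HP) as A1.
  destruct j as [|[|j]]; [| |exfalso; lia].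
  - apply (goodn_ext _ _ (fun s => Cplus (RtoC (fst (ccoord 0 (psi zeta ((a,b),(c,d)) Phi t1 t2 s)))) (Cmult Ci (Cmult (RtoC (-2)) (Cmult (RtoC (snd (ccoord 0 (psi zeta ((a,b),(c,d)) Phi t1 t2 s)))) (Cmult (RtoC (snd (ccoord 0 (psi zeta ((a,b),(c,d)) Phi t1 t2 s)))) (RtoC (snd (ccoord 0 (psi zeta ((a,b),(c,d)) Phi t1 t2 s)))))))))); auto.
    intros; rewrite rho_d0. apply C_ext; simpl; ring.
    gtac.
  - apply (goodn_ext _ _ (fun s => Cconj (ccoord 1 (psi zeta ((a,b),(c,d)) Phi t1 t2 s)))); auto.
    intros; rewrite rho_d1. apply C_ext; simpl; ring.
    gtac.
Qed.

Lemma atom_rho_ddbar zeta a b c d Phi delta t1 t2 k l : unitary2 ((a,b),(c,d)) ->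
  C2_on (chart_dom zeta ((a,b),(c,d)) Phi delta) (fun t1 t2 t3 => RtoC (Phi t1 t2 t3)) ->
  (k < 2)%nat -> (l < 2)%nat ->
  goodn 1 (fun s => chart_dom zeta ((a,b),(c,d)) Phi delta t1 t2 s) (fun s => rho_ddbar k l (psi zeta ((a,b),(c,d)) Phi t1 t2 s)).
Proof. intros HU HP Hk Hl. pose proof (O_open zeta a b c d Phi delta t1 t2 HU HP) as Op.
  pose proof (goodn_weak _ _ _ (atom_psi zeta a b c d Phi delta t1 t2 0 HU HP)) as A0.
  destruct k as [|[|k]]; [| |exfalso; lia]; destruct l as [|[|l]]; try (exfalso; lia).
  - apply (goodn_ext _ _ (fun s => Cmult (RtoC (/2)) (Cplus (RtoC 1) (Cmult (RtoC 6) (Cmult (RtoC (snd (ccoord 0 (psi zeta ((a,b),(c,d)) Phi t1 t2 s)))) (RtoC (snd (ccoord 0 (psi zeta ((a,b),(c,d)) Phi t1 t2 s))))))))); auto.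
    intros; rewrite rho_ddbar00. apply C_ext; simpl; field.
    gtac.
  - apply (goodn_ext _ _ (fun s => RtoC 0)); auto. intros; rewrite rho_ddbar01; reflexivity. gtac.
  - apply (goodn_ext _ _ (fun s => RtoC 0)); auto. intros; rewrite rho_ddbar10; reflexivity. gtac.
  - apply (goodn_ext _ _ (fun s => RtoC 1)); auto. intros; rewrite rho_ddbar11; reflexivity. gtac.
Qed.

Lemma atom_W zeta a b c d Phi delta t1 t2 j m : unitary2 ((a,b),(c,d)) ->
  C2_on (chart_dom zeta ((a,b),(c,d)) Phi delta) (fun t1 t2 t3 => RtoC (Phi t1 t2 t3)) ->
  (m < 3)%nat ->
  goodn 1 (fun s => chart_dom zeta ((a,b),(c,d)) Phi delta t1 t2 s)
    (fun s => pt m (fun x y z => ccoord j (psi zeta ((a,b),(c,d)) Phi x y z)) t1 t2 s) /\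
  goodn 1 (fun s => chart_dom zeta ((a,b),(c,d)) Phi delta t1 t2 s)
    (fun s => pt m (fun x y z => Cconj (ccoord j (psi zeta ((a,b),(c,d)) Phi x y z))) t1 t2 s).
Proof. intros HU HP Hm. pose proof (O_open zeta a b c d Phi delta t1 t2 HU HP) as Op.
  assert (Ak : goodn 1 (fun s => chart_dom zeta ((a,b),(c,d)) Phi delta t1 t2 s) (fun s => pt m (gPhi Phi) t1 t2 s))
    by (apply (C2_atom_k _ _ t1 t2 m HP Hm Op)).
  assert (Ex : forall s, chart_dom zeta ((a,b),(c,d)) Phi delta t1 t2 s -> ex_pt m (gPhi Phi) t1 t2 s).
  { intros s Hs. destruct HP as [H1 _]. apply (H1 t1 t2 s Hs m Hm). }
  assert (G : goodn 1 (fun s => chart_dom zeta ((a,b),(c,d)) Phi delta t1 t2 s) (fun s => Wform a b c d j m (fst (pt m (gPhi Phi) t1 t2 s)))).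
  { destruct m as [|[|[|m]]]; [| | |exfalso; lia]; cbn [Wform]; gtac. }
  split.
  - apply (goodn_ext _ _ _ _ Op (fun s Hs => eq_sym (proj1 (W_pt zeta a b c d Phi t1 t2 s j m Hm (Ex s Hs))))). exact G.
  - apply (goodn_ext _ _ _ _ Op (fun s Hs => eq_sym (proj2 (W_pt zeta a b c d Phi t1 t2 s j m Hm (Ex s Hs))))). gtac.
Qed.

Lemma good_L zeta a b c d Phi delta t1 t2 : unitary2 ((a,b),(c,d)) ->
  C2_on (chart_dom zeta ((a,b),(c,d)) Phi delta) (fun t1 t2 t3 => RtoC (Phi t1 t2 t3)) ->
  goodn 1 (fun s => chart_dom zeta ((a,b),(c,d)) Phi delta t1 t2 s) (fun s => LambdaL zeta ((a,b),(c,d)) Phi t1 t2 s).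
Proof. intros HU HP.
  destruct (atom_W zeta a b c d Phi delta t1 t2 0 0 HU HP ltac:(lia)) as [W00 V00].
  destruct (atom_W zeta a b c d Phi delta t1 t2 0 1 HU HP ltac:(lia)) as [W01 V01].
  destruct (atom_W zeta a b c d Phi delta t1 t2 0 2 HU HP ltac:(lia)) as [W02 V02].
  destruct (atom_W zeta a b c d Phi delta t1 t2 1 0 HU HP ltac:(lia)) as [W10 V10].
  destruct (atom_W zeta a b c d Phi delta t1 t2 1 1 HU HP ltac:(lia)) as [W11 V11].
  destruct (atom_W zeta a b c d Phi delta t1 t2 1 2 HU HP ltac:(lia)) as [W12 V12].
  pose proof (goodn_weak _ _ _ (atom_rho_d zeta a b c d Phi delta t1 t2 0 HU HP ltac:(lia))) as R0.
  pose proof (goodn_weak _ _ _ (atom_rho_d zeta a b c d Phi delta t1 t2 1 HU HP ltac:(lia))) as R1.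
  pose proof (atom_rho_ddbar zeta a b c d Phi delta t1 t2 0 0 HU HP ltac:(lia) ltac:(lia)) as D00.
  pose proof (atom_rho_ddbar zeta a b c d Phi delta t1 t2 0 1 HU HP ltac:(lia) ltac:(lia)) as D01.
  pose proof (atom_rho_ddbar zeta a b c d Phi delta t1 t2 1 0 HU HP ltac:(lia) ltac:(lia)) as D10.
  pose proof (atom_rho_ddbar zeta a b c d Phi delta t1 t2 1 1 HU HP ltac:(lia) ltac:(lia)) as D11.
  cbv beta zeta delta [LambdaL pullback_coef sum2 det3].
  gtac.
Qed.

Lemma good_Delta zeta a b c d Phi delta t1 t2 z : unitary2 ((a,b),(c,d)) ->
  C2_on (chart_dom zeta ((a,b),(c,d)) Phi delta) (fun t1 t2 t3 => RtoC (Phi t1 t2 t3)) ->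
  goodn 2 (fun s => chart_dom zeta ((a,b),(c,d)) Phi delta t1 t2 s) (fun s => LDelta (psi zeta ((a,b),(c,d)) Phi t1 t2 s) z).
Proof. intros HU HP.
  pose proof (atom_rho_d zeta a b c d Phi delta t1 t2 0 HU HP ltac:(lia)) as R0.
  pose proof (atom_rho_d zeta a b c d Phi delta t1 t2 1 HU HP ltac:(lia)) as R1.
  pose proof (atom_psi zeta a b c d Phi delta t1 t2 0 HU HP) as P0.
  pose proof (atom_psi zeta a b c d Phi delta t1 t2 1 HU HP) as P1.
  cbv beta delta [LDelta sum2].
  gtac.
Qed.

Lemma ftc_gen (H D : R -> C) (M : R) :
  (forall s, CDer H s (D s)) -> (forall s, Ccont D s) -> (forall s, M < Rabs s -> H s = RtoC 0) ->
  is_RInt_gen (V := C_R_CompleteNormedModule) D (Rbar_locally m_infty) (Rbar_locally p_infty) (RtoC 0).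
Proof. intros HD HC HS. unfold is_RInt_gen.
  apply (filterlimi_lim_ext_loc (fun _ => RtoC 0)).
  2: apply filterlim_const.
  apply Filter_prod with (fun x => x < - Rabs M) (fun y => Rabs M < y).
  - exists (- Rabs M). auto.
  - exists (Rabs M). auto.
  - intros x y Hx Hy. simpl.
    assert (Hx0 : H x = RtoC 0) by (apply HS; rewrite Rabs_left by (pose proof (Rabs_pos M); lra); pose proof (Rle_abs M); lra).
    assert (Hy0 : H y = RtoC 0) by (apply HS; rewrite Rabs_right by (pose proof (Rabs_pos M); lra); pose proof (Rle_abs M); lra).
    assert (I1 : is_RInt (fun t => fst (D t)) x y (fst (H y) - fst (H x))).
    { apply (is_RInt_derive (fun t => fst (H t))). intros t _. apply HD. intros t _. apply HC. }
    assert (I2 : is_RInt (fun t => snd (D t)) x y (snd (H y) - snd (H x))).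
    { apply (is_RInt_derive (fun t => snd (H t))). intros t _. apply HD. intros t _. apply HC. }
    rewrite Hx0, Hy0 in I1, I2. simpl in I1, I2. rewrite Rminus_0_r in I1, I2.
    pose proof (is_RInt_fct_extend_pair (U:=R_NormedModule) (V:=R_NormedModule) D x y 0 0 I1 I2) as I.
    exact I.
Qed.

Lemma RInt_gen_eq_of_diff (F G : R -> C) :
  is_RInt_gen (V := C_R_CompleteNormedModule) (fun s => Cminus (G s) (F s)) (Rbar_locally m_infty) (Rbar_locally p_infty) (RtoC 0) ->
  RInt_gen (V := C_R_CompleteNormedModule) F (Rbar_locally m_infty) (Rbar_locally p_infty) =
  RInt_gen (V := C_R_CompleteNormedModule) G (Rbar_locally m_infty) (Rbar_locally p_infty).
Proof. intros HD. unfold RInt_gen. f_equal. apply functional_extensionality; intro l.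
  apply propositional_extensionality. split; intro H.
  - pose proof (is_RInt_gen_plus _ _ _ _ H HD) as P.
    apply (is_RInt_gen_ext (fun y => plus (F y) (Cminus (G y) (F y)))).
    apply filter_forall. intros. apply C_ext; simpl; ring.
    assert (E : plus l (RtoC 0) = l) by exact (plus_zero_r l). rewrite E in P. exact P.
  - pose proof (is_RInt_gen_minus _ _ _ _ H HD) as P.
    apply (is_RInt_gen_ext (fun y => minus (G y) (Cminus (G y) (F y)))).
    apply filter_forall. intros. apply C_ext; simpl; ring.
    assert (E : minus l (RtoC 0) = l) by exact (minus_zero_r l). rewrite E in P. exact P.
Qed.

Lemma locally_abs (s' s eps : R) : Rabs (s' - s) < eps -> locally s' (fun y => Rabs (y - s) < eps).
Proof. intros H. assert (P : 0 < eps - Rabs (s' - s)) by lra.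
  exists (mkposreal _ P). intros y Hy. unfold ball in Hy; simpl in Hy. unfold AbsRing_ball in Hy.
  simpl in Hy. unfold abs in Hy; simpl in Hy. unfold minus, plus, opp in Hy; simpl in Hy.
  replace (y - s) with ((y - s') + (s' - s)) by ring.
  eapply Rle_lt_trans. apply Rabs_triang. fold (Rminus y s') in Hy. lra.
Qed.

Lemma restr_in zeta U Phi delta g t1 t2 s : chart_dom zeta U Phi delta t1 t2 s ->
  restr zeta U Phi delta g t1 t2 s = g t1 t2 s.
Proof. intros H; unfold restr; destruct Rlt_dec; [reflexivity|contradiction]. Qed.

Lemma Cmult_0_l' (x : C) : Cmult (RtoC 0) x = RtoC 0.
Proof. apply C_ext; simpl; ring. Qed.

Lemma inner zeta a b c d Phi delta f z t1 t2
  (HU : unitary2 ((a,b),(c,d)))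
  (Hgraph : forall w, dist2 w zeta < delta ->
     (rho w = 0 <-> Im (snd (to_loc zeta ((a,b),(c,d)) w)) =
        Phi (Re (fst (to_loc zeta ((a,b),(c,d)) w))) (Im (fst (to_loc zeta ((a,b),(c,d)) w)))
            (Re (snd (to_loc zeta ((a,b),(c,d)) w)))))
  (HPhi : C2_on (chart_dom zeta ((a,b),(c,d)) Phi delta) (fun t1 t2 t3 => RtoC (Phi t1 t2 t3)))
  (HdD : forall t1 t2 t3 z', chart_dom zeta ((a,b),(c,d)) Phi delta t1 t2 t3 ->
     dist2 z' zeta < delta -> dDelta_u2 zeta ((a,b),(c,d)) Phi z' t1 t2 t3 <> RtoC 0)
  (Hf1 : C1_on (chart_dom zeta ((a,b),(c,d)) Phi delta) (fun t1 t2 t3 => f (psi zeta ((a,b),(c,d)) Phi t1 t2 t3)))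
  (Hfsupp : exists r, r < delta /\
     forall w, rho w = 0 -> r <= dist2 w zeta -> f w = RtoC 0)
  (Hz : rho z < 0) (Hzd : dist2 z zeta < delta) :
  RInt_gen (V := C_R_CompleteNormedModule) (fun t3 => restr zeta ((a,b),(c,d)) Phi delta (fun t1 t2 t3 =>
    let w := psi zeta ((a,b),(c,d)) Phi t1 t2 t3 in
    Cdiv (Cmult (f w) (LambdaL zeta ((a,b),(c,d)) Phi t1 t2 t3)) (Cmult (LDelta w z) (LDelta w z))) t1 t2 t3)
    (Rbar_locally m_infty) (Rbar_locally p_infty) =
  RInt_gen (V := C_R_CompleteNormedModule) (fun t3 => restr zeta ((a,b),(c,d)) Phi delta (fun t1 t2 t3 =>
    Cmult (Cinv (LDelta (psi zeta ((a,b),(c,d)) Phi t1 t2 t3) z))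
          (pt 2 (restr zeta ((a,b),(c,d)) Phi delta (fun s1 s2 s3 =>
                   Cmult (f (psi zeta ((a,b),(c,d)) Phi s1 s2 s3)) (gammaL zeta ((a,b),(c,d)) Phi z s1 s2 s3)))
              t1 t2 t3)) t1 t2 t3)
    (Rbar_locally m_infty) (Rbar_locally p_infty).
Proof.
  destruct Hfsupp as [r [Hr Hfs]].
  pose proof (O_open zeta a b c d Phi delta t1 t2 HU HPhi) as Op.
  assert (rhoO : forall s, (chart_dom zeta ((a,b),(c,d)) Phi delta t1 t2 s) -> rho ((psi zeta ((a,b),(c,d)) Phi t1 t2 s)) = 0).
  { intros s Hs. apply (rho_psi zeta a b c d Phi delta t1 t2 s HU Hgraph Hs). }
  assert (Dnz : forall s, (chart_dom zeta ((a,b),(c,d)) Phi delta t1 t2 s) -> (LDelta ((psi zeta ((a,b),(c,d)) Phi t1 t2 s)) z) <> RtoC 0).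
  { intros s Hs. apply Delta_neq0; auto. }
  pose proof (good_Delta zeta a b c d Phi delta t1 t2 z HU HPhi) as gD.
  pose proof (good_L zeta a b c d Phi delta t1 t2 HU HPhi) as gL.
  pose proof (C1_atom _ (fun t1 t2 t3 => f (psi zeta ((a,b),(c,d)) Phi t1 t2 t3)) t1 t2 Hf1 Op) as ga.
  pose proof (goodn_cont _ _ _ gD) as cD.
  destruct gD as [D1 [HD1 gD1]].
  pose proof (goodn_cont _ _ _ gD1) as cD1.
  assert (CDD : forall s, (chart_dom zeta ((a,b),(c,d)) Phi delta t1 t2 s) -> dDelta_u2 zeta ((a,b),(c,d)) Phi z t1 t2 s = D1 s).
  { intros s Hs. apply (CD_eq _ _ _ (HD1 s Hs)). }
  assert (D1nz : forall s, (chart_dom zeta ((a,b),(c,d)) Phi delta t1 t2 s) -> D1 s <> RtoC 0).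
  { intros s Hs. rewrite <- CDD by auto. apply HdD; auto. }
  assert (gq : goodn 1 (fun s => chart_dom zeta ((a,b),(c,d)) Phi delta t1 t2 s) (fun s => (Cmult (f ((psi zeta ((a,b),(c,d)) Phi t1 t2 s))) (gammaL zeta ((a,b),(c,d)) Phi z t1 t2 s)))).
  { unfold gammaL, Cdiv. apply goodn_mult; auto. apply goodn_mult; auto.
    apply goodn_inv. intros; rewrite CDD; auto.
    apply (goodn_ext _ _ D1); auto. intros; symmetry; auto. }
  pose proof (goodn_cont _ _ _ gq) as cq.
  destruct gq as [q1 [Hq1 cq1]]. simpl in cq1.
  assert (fz : forall s, (chart_dom zeta ((a,b),(c,d)) Phi delta t1 t2 s) -> r <= dist2 ((psi zeta ((a,b),(c,d)) Phi t1 t2 s)) zeta -> f ((psi zeta ((a,b),(c,d)) Phi t1 t2 s)) = RtoC 0).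
  { intros s Hs Hd. apply Hfs; auto. }
  match goal with |- RInt_gen ?F _ _ = RInt_gen ?G _ _ => set (FF := F); set (GG := G) end.
  assert (RQ : forall s', restr zeta ((a,b),(c,d)) Phi delta (fun s1 s2 s3 =>
                   Cmult (f (psi zeta ((a,b),(c,d)) Phi s1 s2 s3)) (gammaL zeta ((a,b),(c,d)) Phi z s1 s2 s3)) t1 t2 s' =
                   if Rlt_dec (dist2 ((psi zeta ((a,b),(c,d)) Phi t1 t2 s')) zeta) delta then (Cmult (f ((psi zeta ((a,b),(c,d)) Phi t1 t2 s'))) (gammaL zeta ((a,b),(c,d)) Phi z t1 t2 s')) else RtoC 0) by reflexivity.
  assert (DE : forall s, (chart_dom zeta ((a,b),(c,d)) Phi delta t1 t2 s) -> Cminus (GG s) (FF s) = (Cplus (Cmult (q1 s) (Cinv ((LDelta ((psi zeta ((a,b),(c,d)) Phi t1 t2 s)) z)))) (Cmult ((Cmult (f ((psi zeta ((a,b),(c,d)) Phi t1 t2 s))) (gammaL zeta ((a,b),(c,d)) Phi z t1 t2 s))) (Copp (Cmult (D1 s) (Cinv (Cmult ((LDelta ((psi zeta ((a,b),(c,d)) Phi t1 t2 s)) z)) ((LDelta ((psi zeta ((a,b),(c,d)) Phi t1 t2 s)) z))))))))).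
  { intros s Hs.
    assert (Cq : pt 2 (restr zeta ((a,b),(c,d)) Phi delta (fun s1 s2 s3 =>
                   Cmult (f (psi zeta ((a,b),(c,d)) Phi s1 s2 s3)) (gammaL zeta ((a,b),(c,d)) Phi z s1 s2 s3))) t1 t2 s = q1 s).
    { change (CD (fun s' => restr zeta ((a,b),(c,d)) Phi delta (fun s1 s2 s3 =>
                   Cmult (f (psi zeta ((a,b),(c,d)) Phi s1 s2 s3)) (gammaL zeta ((a,b),(c,d)) Phi z s1 s2 s3)) t1 t2 s') s = q1 s).
      apply CD_eq. apply (CDer_ext_loc (fun s => (Cmult (f ((psi zeta ((a,b),(c,d)) Phi t1 t2 s))) (gammaL zeta ((a,b),(c,d)) Phi z t1 t2 s)))); auto.
      apply (filter_imp (fun s => chart_dom zeta ((a,b),(c,d)) Phi delta t1 t2 s)); auto. intros x Hx. rewrite RQ. destruct Rlt_dec; [reflexivity|contradiction]. }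
    unfold GG, FF. rewrite (restr_in _ _ _ _ _ _ _ _ Hs), (restr_in _ _ _ _ _ _ _ _ Hs). cbv beta zeta. rewrite Cq.
    unfold gammaL, Cdiv. rewrite CDD by auto.
    pose proof (Dnz s Hs). pose proof (D1nz s Hs). field. auto. }
  assert (Hin : forall s, (chart_dom zeta ((a,b),(c,d)) Phi delta t1 t2 s) -> CDer (fun s => (if Rlt_dec (dist2 ((psi zeta ((a,b),(c,d)) Phi t1 t2 s)) zeta) delta then Cmult ((Cmult (f ((psi zeta ((a,b),(c,d)) Phi t1 t2 s))) (gammaL zeta ((a,b),(c,d)) Phi z t1 t2 s))) (Cinv ((LDelta ((psi zeta ((a,b),(c,d)) Phi t1 t2 s)) z))) else RtoC 0)) s ((Cplus (Cmult (q1 s) (Cinv ((LDelta ((psi zeta ((a,b),(c,d)) Phi t1 t2 s)) z)))) (Cmult ((Cmult (f ((psi zeta ((a,b),(c,d)) Phi t1 t2 s))) (gammaL zeta ((a,b),(c,d)) Phi z t1 t2 s))) (Copp (Cmult (D1 s) (Cinv (Cmult ((LDelta ((psi zeta ((a,b),(c,d)) Phi t1 t2 s)) z)) ((LDelta ((psi zeta ((a,b),(c,d)) Phi t1 t2 s)) z)))))))))).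
  { intros s Hs. apply (CDer_ext_loc (fun s => Cmult ((Cmult (f ((psi zeta ((a,b),(c,d)) Phi t1 t2 s))) (gammaL zeta ((a,b),(c,d)) Phi z t1 t2 s))) (Cinv ((LDelta ((psi zeta ((a,b),(c,d)) Phi t1 t2 s)) z))))).
    apply (filter_imp (fun s => chart_dom zeta ((a,b),(c,d)) Phi delta t1 t2 s)); auto. intros x Hx. destruct Rlt_dec; [reflexivity|contradiction].
    apply CDer_mult. auto. apply CDer_inv; auto. }
  assert (Hout : forall s, ~ (chart_dom zeta ((a,b),(c,d)) Phi delta t1 t2 s) -> exists eps, 0 < eps /\ forall s', Rabs (s' - s) < eps ->
             (if Rlt_dec (dist2 ((psi zeta ((a,b),(c,d)) Phi t1 t2 s')) zeta) delta then Cmult ((Cmult (f ((psi zeta ((a,b),(c,d)) Phi t1 t2 s'))) (gammaL zeta ((a,b),(c,d)) Phi z t1 t2 s'))) (Cinv ((LDelta ((psi zeta ((a,b),(c,d)) Phi t1 t2 s')) z))) else RtoC 0) = RtoC 0 /\ Cminus (GG s') (FF s') = RtoC 0).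
  { intros s Hs. destruct (closure_lem zeta a b c d Phi delta r t1 t2 s HU Hgraph Hr Hs) as [eps [He Heps]].
    assert (fz2 : forall s', Rabs (s' - s) < eps -> (chart_dom zeta ((a,b),(c,d)) Phi delta t1 t2 s') -> f ((psi zeta ((a,b),(c,d)) Phi t1 t2 s')) = RtoC 0).
    { intros s0 H1 H2; apply fz; [exact H2| apply Heps; auto]. }
    exists eps; split; auto. intros s' Hs'. split.
    - destruct Rlt_dec as [h|h]; auto. rewrite fz2 by auto. ring.
    - destruct (classic ((chart_dom zeta ((a,b),(c,d)) Phi delta t1 t2 s'))) as [h|h].
      + assert (Cq : pt 2 (restr zeta ((a,b),(c,d)) Phi delta (fun s1 s2 s3 =>
                   Cmult (f (psi zeta ((a,b),(c,d)) Phi s1 s2 s3)) (gammaL zeta ((a,b),(c,d)) Phi z s1 s2 s3))) t1 t2 s' = RtoC 0).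
        { change (CD (fun x => restr zeta ((a,b),(c,d)) Phi delta (fun s1 s2 s3 =>
                   Cmult (f (psi zeta ((a,b),(c,d)) Phi s1 s2 s3)) (gammaL zeta ((a,b),(c,d)) Phi z s1 s2 s3)) t1 t2 x) s' = RtoC 0).
          apply CD_eq. apply (CDer_ext_loc (fun _ => RtoC 0)).
          apply (filter_imp (fun y => Rabs (y - s) < eps)). 2: apply locally_abs; auto.
          intros y Hy. rewrite RQ. destruct Rlt_dec as [h2|h2]; auto. rewrite fz2 by auto. ring.
          apply CDer_const. }
        unfold GG, FF. rewrite (restr_in _ _ _ _ _ _ _ _ h), (restr_in _ _ _ _ _ _ _ _ h). cbv beta zeta. rewrite Cq.
        rewrite fz2 by auto. unfold Cdiv; ring.
      + unfold GG, FF, restr. cbv beta zeta.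
        destruct (Rlt_dec (dist2 ((psi zeta ((a,b),(c,d)) Phi t1 t2 s')) zeta) delta) as [h'|_]; [contradiction|].
        ring. }
  apply RInt_gen_eq_of_diff.
  apply (ftc_gen (fun s => (if Rlt_dec (dist2 ((psi zeta ((a,b),(c,d)) Phi t1 t2 s)) zeta) delta then Cmult ((Cmult (f ((psi zeta ((a,b),(c,d)) Phi t1 t2 s))) (gammaL zeta ((a,b),(c,d)) Phi z t1 t2 s))) (Cinv ((LDelta ((psi zeta ((a,b),(c,d)) Phi t1 t2 s)) z))) else RtoC 0)) (fun s => Cminus (GG s) (FF s)) (Rabs r)).
  - intros s. destruct (classic ((chart_dom zeta ((a,b),(c,d)) Phi delta t1 t2 s))) as [Hs|Hs].
    + rewrite DE by auto. apply Hin; auto.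
    + destruct (Hout s Hs) as [eps [He H]]. destruct (H s) as [_ E]. rewrite Rminus_eq_0, Rabs_R0; auto.
      rewrite E. apply (CDer_ext_loc (fun _ => RtoC 0)). 2: apply CDer_const.
      apply (filter_imp (fun y => Rabs (y - s) < eps)). intros y Hy; symmetry; apply H; auto.
      apply locally_abs. rewrite Rminus_eq_0, Rabs_R0; auto.
  - intros s. destruct (classic ((chart_dom zeta ((a,b),(c,d)) Phi delta t1 t2 s))) as [Hs|Hs].
    + apply (Ccont_ext_loc (fun s => (Cplus (Cmult (q1 s) (Cinv ((LDelta ((psi zeta ((a,b),(c,d)) Phi t1 t2 s)) z)))) (Cmult ((Cmult (f ((psi zeta ((a,b),(c,d)) Phi t1 t2 s))) (gammaL zeta ((a,b),(c,d)) Phi z t1 t2 s))) (Copp (Cmult (D1 s) (Cinv (Cmult ((LDelta ((psi zeta ((a,b),(c,d)) Phi t1 t2 s)) z)) ((LDelta ((psi zeta ((a,b),(c,d)) Phi t1 t2 s)) z)))))))))). apply (filter_imp (fun s => chart_dom zeta ((a,b),(c,d)) Phi delta t1 t2 s)); auto. intros x Hx; symmetry; apply DE; auto.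
      apply Ccont_plus; apply Ccont_mult; auto.
      apply Ccont_inv; auto. apply Ccont_opp, Ccont_mult; auto. apply Ccont_inv.
      apply Cmult_neq0; auto. apply Ccont_mult; auto.
    + destruct (Hout s Hs) as [eps [He H]].
      apply (Ccont_ext_loc (fun _ => RtoC 0)). 2: apply Ccont_const.
      apply (filter_imp (fun y => Rabs (y - s) < eps)). intros y Hy; symmetry; apply H; auto.
      apply locally_abs. rewrite Rminus_eq_0, Rabs_R0; auto.
  - intros s Hs. destruct Rlt_dec as [h|h]; auto.
    rewrite fz; auto. ring.
    rewrite dist_psi by auto.
    apply Rle_trans with (Rabs s). pose proof (Rle_abs r). lra.
    rewrite <- sqrt_Rsqr_abs. apply sqrt_le_1_alt. unfold Rsqr. nra.
Qed.

Theorem corollary2p3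
  (zeta : C2) (U : mat2) (Phi : R -> R -> R -> R) (delta : R)
  (f : C2 -> C) (z : C2)
  (Hzeta : rho zeta = 0)
  (HU : unitary2 U)
  (Hnormal : pdR 3 (fun w' => rho (from_loc zeta U w')) C2zero = grad_norm rho zeta /\
             forall k, (k < 3)%nat -> pdR k (fun w' => rho (from_loc zeta U w')) C2zero = 0)
  (Hdelta : 0 < delta)
  (Hgraph : forall w, dist2 w zeta < delta ->
     (rho w = 0 <-> Im (snd (to_loc zeta U w)) =
        Phi (Re (fst (to_loc zeta U w))) (Im (fst (to_loc zeta U w)))
            (Re (snd (to_loc zeta U w)))))
  (HPhi : C2_on (chart_dom zeta U Phi delta) (fun t1 t2 t3 => RtoC (Phi t1 t2 t3)))
  (HdD : forall t1 t2 t3 z', chart_dom zeta U Phi delta t1 t2 t3 ->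
     dist2 z' zeta < delta -> dDelta_u2 zeta U Phi z' t1 t2 t3 <> RtoC 0)
  (Hf1 : C1_on (chart_dom zeta U Phi delta) (fun t1 t2 t3 => f (psi zeta U Phi t1 t2 t3)))
  (Hfsupp : exists r, r < delta /\
     forall w, rho w = 0 -> r <= dist2 w zeta -> f w = RtoC 0)
  (Hz : rho z < 0) (Hzd : dist2 z zeta < delta) :
  cauchy_leray_chart zeta U Phi delta f z =
  int3 (restr zeta U Phi delta (fun t1 t2 t3 =>
    Cmult (Cinv (LDelta (psi zeta U Phi t1 t2 t3) z))
          (pt 2 (restr zeta U Phi delta (fun s1 s2 s3 =>
                   Cmult (f (psi zeta U Phi s1 s2 s3)) (gammaL zeta U Phi z s1 s2 s3)))
              t1 t2 t3))).
Proof.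
  destruct U as [[a b] [c d]].
  unfold cauchy_leray_chart, int3.
  match goal with |- RInt_gen ?F ?A ?B = RInt_gen ?G ?A ?B => assert (E : F = G); [|rewrite E; reflexivity] end.
  apply functional_extensionality; intro t1.
  match goal with |- RInt_gen ?F ?A ?B = RInt_gen ?G ?A ?B => assert (E : F = G); [|rewrite E; reflexivity] end.
  apply functional_extensionality; intro t2.
  exact (inner zeta a b c d Phi delta f z t1 t2 HU Hgraph HPhi HdD Hf1 Hfsupp Hz Hzd).
Qed.
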